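(* Let $0\le B\le A\in B(H)$. Then for every $\xi\in\operatorname{Adm}(B)$, $$\operatorname{tr}\big((A-I)_+\big)\ \ge\ \sum\{\xi_j-1 : \xi_j>1\}.$$
   Context: $\operatorname{Adm}(B)$ is the set of sequences $\xi\in\ell^\infty_+$ such that $B=\sum_j\xi_jP_j$ for some rank-one projections $P_j$ (series converging strongly if infinite). $(A-I)_+$ is the positive part of the selfadjoint operator $A-I$, and $\operatorname{tr}$ is the standard trace. *)

(* Defs.v *)
From Stdlib Require Import Reals Lra List.
Open Scope R_scope.
Set Implicit Arguments.

Record Cx := mkC { Re : R ; Im : R }.
Definition C0 : Cx := mkC 0 0.
Definition C1 : Cx := mkC 1 0.
Definition RC (r : R) : Cx := mkC r 0.
Definition Cadd (a b : Cx) : Cx := mkC (Re a + Re b) (Im a + Im b).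
Definition Cmul (a b : Cx) : Cx :=
  mkC (Re a * Re b - Im a * Im b) (Re a * Im b + Im a * Re b).
Definition Cconj (a : Cx) : Cx := mkC (Re a) (- Im a).

Record HOps (H : Type) := {
  vadd  : H -> H -> H ;
  vzero : H ;
  vopp  : H -> H ;
  vscal : Cx -> H -> H ;
  ip    : H -> H -> Cx   (* linear in the 1st, conjugate-linear in the 2nd argument *)
}.

Section HilbertDefs.
Variable H : Type.
Variable o : HOps H.

Definition vsub (x y : H) : H := vadd o x (vopp o y).
Definition norm (x : H) : R := sqrt (Re (ip o x x)).

Definition cv_to (u : nat -> H) (l : H) : Prop :=
  forall eps, eps > 0 -> exists N, forall n, (n >= N)%nat -> norm (vsub (u n) l) < eps.
Definition cauchy (u : nat -> H) : Prop :=
  forall eps, eps > 0 -> exists N, forall n m, (n >= N)%nat -> (m >= N)%nat ->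
    norm (vsub (u n) (u m)) < eps.

Record is_CHilbert : Prop := {
  vadd_assoc : forall x y z, vadd o x (vadd o y z) = vadd o (vadd o x y) z ;
  vadd_comm  : forall x y, vadd o x y = vadd o y x ;
  vadd_0     : forall x, vadd o x (vzero o) = x ;
  vadd_opp   : forall x, vadd o x (vopp o x) = vzero o ;
  vscal_1    : forall x, vscal o C1 x = x ;
  vscal_assoc : forall a b x, vscal o a (vscal o b x) = vscal o (Cmul a b) x ;
  vscal_distr_v : forall a x y, vscal o a (vadd o x y) = vadd o (vscal o a x) (vscal o a y) ;
  vscal_distr_s : forall a b x, vscal o (Cadd a b) x = vadd o (vscal o a x) (vscal o b x) ;
  ip_add_l  : forall x y z, ip o (vadd o x y) z = Cadd (ip o x z) (ip o y z) ;
  ip_scal_l : forall a x y, ip o (vscal o a x) y = Cmul a (ip o x y) ;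
  ip_conj   : forall x y, ip o y x = Cconj (ip o x y) ;
  ip_pos    : forall x, 0 <= Re (ip o x x) ;
  ip_def    : forall x, Re (ip o x x) = 0 -> x = vzero o ;
  complete  : forall u, cauchy u -> exists l, cv_to u l
}.

Definition linear_op (T : H -> H) : Prop :=
  (forall x y, T (vadd o x y) = vadd o (T x) (T y)) /\
  (forall a x, T (vscal o a x) = vscal o a (T x)).

Definition bounded_op (T : H -> H) : Prop :=
  linear_op T /\ exists M, forall x, norm (T x) <= M * norm x.

Definition opsub (S T : H -> H) : H -> H := fun x => vsub (S x) (T x).
Definition idop : H -> H := fun x => x.
Definition zeroop : H -> H := fun _ => vzero o.

Definition positive_op (T : H -> H) : Prop :=
  forall x, Im (ip o (T x) x) = 0 /\ 0 <= Re (ip o (T x) x).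

Definition op_le (S T : H -> H) : Prop := positive_op (opsub T S).

Definition rank_one_proj (P : H -> H) : Prop :=
  exists e, norm e = 1 /\ forall x, P x = vscal o (ip o x e) e.

Definition op_sqrt (S Y : H -> H) : Prop :=
  bounded_op S /\ positive_op S /\ forall x, S (S x) = Y x.

(* P = X_+ = (X + |X|)/2 with |X| = (X^2)^{1/2} *)
Definition pos_part (X P : H -> H) : Prop :=
  exists S, op_sqrt S (fun x => X (X x)) /\
    forall x, P x = vscal o (RC (1/2)) (vadd o (X x) (S x)).

Definition onb (I : Type) (e : I -> H) : Prop :=
  (forall i, ip o (e i) (e i) = C1) /\
  (forall i j, i <> j -> ip o (e i) (e j) = C0) /\
  (forall x, (forall i, ip o x (e i) = C0) -> x = vzero o).

(* tr T >= s  (in [0,+oo]) where tr T = sum_i <T e_i, e_i> over an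
   orthonormal basis (a sum of nonnegative terms for T >= 0, i.e. the sup
   of its finite partial sums); required for every orthonormal basis. *)
Definition trace_ge (T : H -> H) (s : R) : Prop :=
  forall (I : Type) (e : I -> H), onb e ->
    forall eps, eps > 0 -> exists l : list I, NoDup l /\
      s - eps < fold_right (fun i acc => Re (ip o (T (e i)) (e i)) + acc) 0 l.

(* index set: {0,...,n-1} if len = Some n, all of nat if len = None *)
Definition in_idx (len : option nat) (j : nat) : Prop :=
  match len with Some n => (j < n)%nat | None => True end.
Definition prefix_ok (len : option nat) (N : nat) : Prop :=
  match len with Some n => (N <= n)%nat | None => True end.

Fixpoint psum (xi : nat -> R) (Pj : nat -> H -> H) (n : nat) (x : H) : H :=
  match n with
  | O => vzero o
  | S k => vadd o (psum xi Pj k x) (vscal o (RC (xi k)) (Pj k x))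
  end.

Definition admissible (B : H -> H) (len : option nat) (xi : nat -> R) : Prop :=
  (forall j, in_idx len j -> 0 <= xi j) /\
  (exists M, forall j, in_idx len j -> xi j <= M) /\
  exists Pj : nat -> H -> H,
    (forall j, in_idx len j -> rank_one_proj (Pj j)) /\
    match len with
    | Some n => forall x, B x = psum xi Pj n x
    | None => forall x, cv_to (fun N => psum xi Pj N x) (B x)
    end.

End HilbertDefs.

(* partial sums of  sum { xi_j - 1 : xi_j > 1 } *)
Fixpoint excess (xi : nat -> R) (N : nat) : R :=
  match N with
  | O => 0
  | S k => excess xi k + (if Rlt_dec 1 (xi k) then xi k - 1 else 0)
  end.

(* Main.v *)
Require Import Defs.
From Stdlib Require Import Reals Lra Lia List Classical FunctionalExtensionality ClassicalEpsilon.
Open Scope R_scope.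
Set Implicit Arguments.

Lemma Cx_eq (a b : Cx) : Re a = Re b -> Im a = Im b -> a = b.
Proof. destruct a, b; simpl; intros; subst; reflexivity. Qed.

Section Basics.
Variable H : Type.
Variable o : HOps H.
Hypothesis hH : is_CHilbert o.

Notation ad := (vadd o).
Notation sc := (vscal o).
Notation z0 := (vzero o).
Notation op := (vopp o).
Notation ipo := (ip o).

Lemma ipAl x y z : ipo (ad x y) z = Cadd (ipo x z) (ipo y z).
Proof. apply (ip_add_l hH). Qed.
Lemma ipSl a x y : ipo (sc a x) y = Cmul a (ipo x y).
Proof. apply (ip_scal_l hH). Qed.
Lemma ipC x y : ipo y x = Cconj (ipo x y).
Proof. apply (ip_conj hH). Qed.

Lemma ipAr x y z : ipo x (ad y z) = Cadd (ipo x y) (ipo x z).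
Proof.
  rewrite ipC, ipAl, (ipC y x), (ipC z x).
  apply Cx_eq; simpl; ring.
Qed.
Lemma ipSr a x y : ipo x (sc a y) = Cmul (Cconj a) (ipo x y).
Proof.
  rewrite ipC, ipSl, (ipC y x). apply Cx_eq; simpl; ring.
Qed.
Lemma ip0l y : ipo z0 y = C0.
Proof.
  assert (E : ipo z0 y = Cadd (ipo z0 y) (ipo z0 y)).
  { rewrite <- ipAl. rewrite (vadd_0 hH). reflexivity. }
  destruct (ipo z0 y) as [a b] eqn:Q. unfold Cadd in E; simpl in E.
  injection E; intros. apply Cx_eq; simpl; lra.
Qed.
Lemma ip0r y : ipo y z0 = C0.
Proof. rewrite ipC, ip0l. apply Cx_eq; simpl; lra. Qed.

Lemma add0l x : ad z0 x = x.
Proof. rewrite (vadd_comm hH). apply (vadd_0 hH). Qed.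

Lemma ipOl x y : ipo (op x) y = Cmul (RC (-1)) (ipo x y).
Proof.
  assert (E : Cadd (ipo x y) (ipo (op x) y) = C0).
  { rewrite <- ipAl, (vadd_opp hH). apply ip0l. }
  destruct (ipo (op x) y) as [a b]; destruct (ipo x y) as [c d].
  unfold Cadd in E; simpl in E. injection E; intros.
  apply Cx_eq; simpl; lra.
Qed.

Lemma vec_ext x y : (forall z, ipo x z = ipo y z) -> x = y.
Proof.
  intros Hz.
  assert (E : ipo (vsub o x y) (vsub o x y) = C0).
  { unfold vsub at 1. rewrite ipAl, ipOl, Hz.
    destruct (ipo y (vsub o x y)). apply Cx_eq; simpl; ring. }
  assert (Z : vsub o x y = z0).
  { apply (ip_def hH). rewrite E. reflexivity. }
  unfold vsub in Z.
  rewrite <- (vadd_0 hH x), <- (vadd_opp hH y), (vadd_comm hH y (op y)), (vadd_assoc hH), Z.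
  apply add0l.
Qed.

Lemma ipOr x y : ipo x (op y) = Cmul (RC (-1)) (ipo x y).
Proof. rewrite ipC, ipOl, (ipC y x). apply Cx_eq; simpl; ring. Qed.

Lemma ipsubl x y z : ipo (vsub o x y) z = Cadd (ipo x z) (Cmul (RC (-1)) (ipo y z)).
Proof. unfold vsub. rewrite ipAl, ipOl. reflexivity. Qed.
Lemma ipsubr x y z : ipo z (vsub o x y) = Cadd (ipo z x) (Cmul (RC (-1)) (ipo z y)).
Proof. unfold vsub. rewrite ipAr, ipOr. reflexivity. Qed.

End Basics.

Ltac vsolve hH :=
  apply (vec_ext hH); intro;
  repeat first [ rewrite (ipAl hH) | rewrite (ipSl hH) | rewrite (ipOl hH)
               | rewrite (ip0l hH) | rewrite (ipsubl hH) ];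
  apply Cx_eq; simpl; ring.

Lemma Rabs_maj2 x : - x <= Rabs x.
Proof. unfold Rabs; destruct (Rcase_abs x); lra. Qed.

Definition c2 (z : Cx) := Re z * Re z + Im z * Im z.

Lemma discr A B C : (forall t, 0 <= A + 2 * t * B + t * t * B * C) -> 0 <= B -> 0 <= C ->
  B <= A * C.
Proof.
  intros Ht HB HC.
  assert (HA : 0 <= A) by (specialize (Ht 0); lra).
  destruct (Rle_lt_or_eq_dec 0 C HC) as [Cp|C0].
  - specialize (Ht (- / C)).
    assert (E : A + 2 * - / C * B + - / C * - / C * B * C = A - B / C).
    { field. lra. }
    rewrite E in Ht.
    assert (B / C <= A) by lra.
    apply (Rmult_le_compat_r C) in H; [|lra].
    unfold Rdiv in H. rewrite Rmult_assoc, Rinv_l in H; lra.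
  - subst C. destruct (Rle_lt_or_eq_dec 0 B HB) as [Bp|B0].
    + specialize (Ht (- (A + 1) / (2 * B))).
      assert (E : A + 2 * (- (A + 1) / (2 * B)) * B = -1) by (field; lra).
      rewrite Rmult_0_r, Rplus_0_r, E in Ht. lra.
    + subst. lra.
Qed.

Section Forms.
Variable H : Type.
Variable o : HOps H.
Hypothesis hH : is_CHilbert o.

Notation ad := (vadd o).
Notation sc := (vscal o).
Notation z0 := (vzero o).
Notation op := (vopp o).
Notation ipo := (ip o).

Definition nsq x := Re (ipo x x).

Lemma nsq_def x : nsq x = Re (ipo x x).
Proof. reflexivity. Qed.

Lemma nsq_ge0 x : 0 <= nsq x.
Proof. apply (ip_pos hH). Qed.

Lemma Im_ipxx x : Im (ipo x x) = 0.
Proof. pose proof (ipC hH x x). destruct (ipo x x) as [a b]. simpl in *. injection H0. lra. Qed.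

Lemma Re_ipC x y : Re (ipo y x) = Re (ipo x y).
Proof. rewrite (ipC hH). reflexivity. Qed.
Lemma Im_ipC x y : Im (ipo y x) = - Im (ipo x y).
Proof. rewrite (ipC hH). reflexivity. Qed.

Lemma norm_nsq x : norm o x = sqrt (nsq x).
Proof. reflexivity. Qed.

Lemma norm_ge0 x : 0 <= norm o x.
Proof. apply sqrt_pos. Qed.

Lemma norm_sq x : norm o x * norm o x = nsq x.
Proof. unfold norm. apply sqrt_sqrt. apply nsq_ge0. Qed.

Definition herm (T : H -> H) := forall x y, ipo (T x) y = ipo x (T y).

Lemma lin_add T x y : linear_op o T -> T (ad x y) = ad (T x) (T y).
Proof. intros [A _]. apply A. Qed.
Lemma lin_scal T a x : linear_op o T -> T (sc a x) = sc a (T x).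
Proof. intros [_ B]. apply B. Qed.
Lemma lin_zero T : linear_op o T -> T z0 = z0.
Proof.
  intros L. apply (vec_ext hH). intro z.
  assert (E : T z0 = ad (T z0) (T z0)).
  { rewrite <- lin_add by exact L. rewrite (vadd_0 hH). reflexivity. }
  assert (E2 : ipo (T z0) z = Cadd (ipo (T z0) z) (ipo (T z0) z)).
  { rewrite <- (ipAl hH), <- E. reflexivity. }
  rewrite (ip0l hH). destruct (ipo (T z0) z) as [a b]. unfold Cadd in E2; simpl in E2.
  injection E2; intros. apply Cx_eq; simpl; lra.
Qed.
Lemma lin_opp T x : linear_op o T -> T (op x) = op (T x).
Proof.
  intros L. apply (vec_ext hH). intro z.
  assert (E : ad (T x) (T (op x)) = z0).
  { rewrite <- lin_add by exact L. rewrite (vadd_opp hH). apply lin_zero; auto. }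
  assert (E2 : Cadd (ipo (T x) z) (ipo (T (op x)) z) = C0).
  { rewrite <- (ipAl hH), E. apply (ip0l hH). }
  rewrite (ipOl hH). destruct (ipo (T (op x)) z) as [a b]; destruct (ipo (T x) z) as [c d].
  unfold Cadd in E2; simpl in E2. injection E2; intros. apply Cx_eq; simpl; lra.
Qed.
Lemma lin_sub T x y : linear_op o T -> T (vsub o x y) = vsub o (T x) (T y).
Proof. intros L. unfold vsub. rewrite lin_add, lin_opp by auto. reflexivity. Qed.

Lemma pos_herm T : linear_op o T -> positive_op o T -> herm T.
Proof.
  intros L P x y.
  pose proof (proj1 (P (ad x y))) as I1.
  pose proof (proj1 (P (ad x (sc (mkC 0 1) y)))) as I2.
  pose proof (proj1 (P x)) as Ix. pose proof (proj1 (P y)) as Iy.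
  rewrite lin_add, lin_scal in I2 by auto. rewrite lin_add in I1 by auto.
  rewrite !(ipAl hH), !(ipAr hH) in I1.
  rewrite !(ipAl hH), !(ipAr hH), !(ipSl hH), !(ipSr hH) in I2.
  rewrite (ipC hH (T y) x).
  destruct (ipo (T x) y) as [a1 a2]; destruct (ipo (T y) x) as [b1 b2].
  simpl in *. apply Cx_eq; simpl; lra.
Qed.

Lemma pos_CS T x y : linear_op o T -> positive_op o T ->
  c2 (ipo (T x) y) <= Re (ipo (T x) x) * Re (ipo (T y) y).
Proof.
  intros L P. pose proof (pos_herm L P) as Hm.
  set (a := ipo (T x) y).
  apply discr.
  - intro t. pose proof (proj2 (P (ad x (sc (Cmul (RC t) a) y)))) as Q.
    rewrite lin_add, lin_scal in Q by auto.
    rewrite !(ipAl hH), !(ipAr hH), !(ipSl hH), !(ipSr hH) in Q.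
    rewrite (Hm y x), (ipC hH (T x) y) in Q. fold a in Q.
    pose proof (proj1 (P y)) as Iy.
    destruct (ipo (T y) y) as [q1 q2]. destruct (ipo (T x) x) as [p1 p2].
    unfold c2. destruct a as [a1 a2]. simpl in *. subst q2. nra.
  - unfold c2. nra.
  - apply (proj2 (P y)).
Qed.

Lemma id_lin : linear_op o (fun x => x).
Proof. split; reflexivity. Qed.
Lemma id_pos : positive_op o (fun x => x).
Proof. intro x. split. apply Im_ipxx. apply nsq_ge0. Qed.

Lemma CS x y : c2 (ipo x y) <= nsq x * nsq y.
Proof. apply (pos_CS (T := fun x => x) x y id_lin id_pos). Qed.

Lemma c2_ge_Re z : Re z * Re z <= c2 z.
Proof. unfold c2. nra. Qed.

Lemma sqrt_le_prod a b c : 0 <= a -> 0 <= b -> c * c <= a * b -> c <= sqrt a * sqrt b.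
Proof.
  intros Ha Hb Hc. rewrite <- sqrt_mult by auto.
  destruct (Rle_or_lt c 0). { pose proof (sqrt_pos (a*b)). lra. }
  rewrite <- (sqrt_square c) by lra. apply sqrt_le_1_alt. lra.
Qed.

Lemma Re_le_norm x y : Re (ipo x y) <= norm o x * norm o y.
Proof.
  apply sqrt_le_prod; try apply nsq_ge0. eapply Rle_trans; [apply c2_ge_Re|apply CS].
Qed.
Lemma absRe_le_norm x y : Rabs (Re (ipo x y)) <= norm o x * norm o y.
Proof.
  unfold Rabs. destruct (Rcase_abs _).
  - assert (E : - Re (ipo x y) = Re (ipo (op x) y)) by (rewrite (ipOl hH); simpl; ring).
    rewrite E. eapply Rle_trans. apply Re_le_norm.
    right. f_equal. unfold norm. f_equal. rewrite (ipOl hH), (ipOr hH). simpl. unfold nsq. ring.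
  - apply Re_le_norm.
Qed.

Lemma nsq_add x y : nsq (ad x y) = nsq x + nsq y + 2 * Re (ipo x y).
Proof. unfold nsq. rewrite (ipAl hH), !(ipAr hH). simpl. rewrite (Re_ipC x y). ring. Qed.

Lemma nsq_sub x y : nsq (vsub o x y) = nsq x + nsq y - 2 * Re (ipo x y).
Proof. unfold nsq. rewrite (ipsubl hH), !(ipsubr hH). simpl. rewrite (Re_ipC x y). ring. Qed.

Lemma nsq_scal a x : nsq (sc a x) = c2 a * nsq x.
Proof. unfold nsq, c2. rewrite (ipSl hH), (ipSr hH). simpl. rewrite Im_ipxx. ring. Qed.

Lemma norm_scalR t x : norm o (sc (RC t) x) = Rabs t * norm o x.
Proof.
  unfold norm. fold (nsq (sc (RC t) x)). rewrite nsq_scal. unfold c2; simpl.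
  rewrite Rmult_0_l, Rplus_0_r, sqrt_mult by (try nra; apply nsq_ge0).
  rewrite <- sqrt_Rsqr_abs. reflexivity.
Qed.

Lemma norm_triangle x y : norm o (ad x y) <= norm o x + norm o y.
Proof.
  unfold norm at 1. fold (nsq (ad x y)). rewrite nsq_add.
  pose proof (Re_le_norm x y). pose proof (norm_sq x). pose proof (norm_sq y).
  pose proof (norm_ge0 x). pose proof (norm_ge0 y).
  rewrite <- (sqrt_square (norm o x + norm o y)) by lra.
  apply sqrt_le_1_alt. nra.
Qed.

End Forms.

Section Ops.
Variable H : Type.
Variable o : HOps H.
Hypothesis hH : is_CHilbert o.

Notation ad := (vadd o).
Notation sc := (vscal o).
Notation z0 := (vzero o).
Notation op := (vopp o).
Notation ipo := (ip o).
Notation nsq := (nsq o).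

Definition bnd (T : H -> H) M := forall x, norm o (T x) <= M * norm o x.

Lemma norm_opp x : norm o (op x) = norm o x.
Proof. unfold norm. rewrite (ipOl hH), (ipOr hH). simpl. f_equal. ring. Qed.

Lemma norm_sub_le x y : norm o (vsub o x y) <= norm o x + norm o y.
Proof. unfold vsub. rewrite <- (norm_opp y). apply (norm_triangle hH). Qed.

Lemma bnd_abs T M : bnd T M -> bnd T (Rabs M).
Proof.
  intros B x. eapply Rle_trans. apply B.
  apply Rmult_le_compat_r. apply (norm_ge0 o). apply Rle_abs.
Qed.

Lemma herm_real T x : herm o T -> Im (ipo (T x) x) = 0.
Proof.
  intros Hm. pose proof (Hm x x). rewrite (ipC hH (T x) x) in H0.
  destruct (ipo (T x) x) as [a b]. simpl in H0. injection H0; intros. simpl. lra.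
Qed.

Lemma key_bound T M x : linear_op o T -> positive_op o T -> bnd T M ->
  nsq (T x) <= Rabs M * Re (ipo (T x) x).
Proof.
  intros L P B. apply bnd_abs in B. set (M' := Rabs M) in *.
  assert (M0 : 0 <= M') by apply Rabs_pos.
  pose proof (pos_CS hH x (T x) L P) as C.
  assert (E : c2 (ipo (T x) (T x)) = nsq (T x) * nsq (T x)).
  { unfold c2, nsq. rewrite (Im_ipxx hH). ring. }
  rewrite E in C.
  assert (C2 : Re (ipo (T (T x)) (T x)) <= M' * nsq (T x)).
  { eapply Rle_trans. apply (Re_le_norm hH). rewrite <- (norm_sq hH (T x)).
    pose proof (B (T x)). pose proof (norm_ge0 o (T x)). nra. }
  pose proof (proj2 (P x)) as Px.
  pose proof (nsq_ge0 hH (T x)) as N0.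
  destruct (Rle_lt_or_eq_dec 0 _ N0) as [Np|Nz].
  - assert (nsq (T x) * nsq (T x) <= (M' * Re (ipo (T x) x)) * nsq (T x)) by nra.
    apply Rmult_le_reg_r in H0; auto.
  - rewrite <- Nz. nra.
Qed.

Section SqrtGe.
Variables S X : H -> H.
Variables MS MX : R.
Hypothesis SL : linear_op o S.
Hypothesis SP : positive_op o S.
Hypothesis SB : bnd S MS.
Hypothesis XL : linear_op o X.
Hypothesis XH : herm o X.
Hypothesis XB : bnd X MX.
Hypothesis SX : forall x, S (S x) = X (X x).

Let D := fun x => vsub o (S x) (X x).
Let f := fun x => Re (ipo (D x) x).

Lemma D_lin : linear_op o D.
Proof.
  split; intros; unfold D.
  - rewrite (lin_add _ _ SL), (lin_add _ _ XL). vsolve hH.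
  - rewrite (lin_scal _ _ SL), (lin_scal _ _ XL). vsolve hH.
Qed.

Lemma D_herm : herm o D.
Proof.
  intros x y. unfold D. rewrite (ipsubl hH), (ipsubr hH), XH.
  rewrite (pos_herm hH SL SP). reflexivity.
Qed.

Lemma D_bnd : bnd D (Rabs MS + Rabs MX).
Proof.
  intro x. unfold D. eapply Rle_trans. apply norm_sub_le.
  pose proof (bnd_abs SB x). pose proof (bnd_abs XB x). lra.
Qed.

Lemma f_scal t x : f (sc (RC t) x) = t * t * f x.
Proof.
  unfold f. rewrite (lin_scal _ _ D_lin), (ipSl hH), (ipSr hH). simpl.
  rewrite (herm_real x D_herm). ring.
Qed.

Lemma f_abs_le x : nsq x = 1 -> - f x <= Rabs MS + Rabs MX.
Proof.
  intros U. unfold f.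
  pose proof (absRe_le_norm hH (D x) x) as A1. pose proof (D_bnd x) as A2.
  assert (A3 : norm o x = 1). { unfold norm. unfold nsq in U. rewrite U. apply sqrt_1. }
  rewrite A3 in *. pose proof (Rabs_maj2 (Re (ipo (D x) x))). lra.
Qed.

Lemma normalize x : 0 < nsq x -> exists u, nsq u = 1 /\ f u = f x / nsq x.
Proof.
  intros Pn. exists (sc (RC (/ norm o x)) x).
  pose proof (norm_sq hH x). pose proof (norm_ge0 o x).
  assert (nP : 0 < norm o x) by (destruct (Rle_lt_or_eq_dec _ _ H1); auto; subst; nra).
  split.
  - rewrite (nsq_scal hH). unfold c2; simpl. rewrite <- H0. field. lra.
  - rewrite f_scal. rewrite <- H0. field. lra.
Qed.

Lemma SgeX : forall x, Re (ipo (X x) x) <= Re (ipo (S x) x).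
Proof.
  apply NNPP. intro Hn. apply not_all_ex_not in Hn. destruct Hn as [x0 Hx0].
  apply Rnot_le_lt in Hx0.
  assert (fx0 : f x0 < 0).
  { unfold f, D. rewrite (ipsubl hH). simpl. lra. }
  assert (nx0 : 0 < nsq x0).
  { destruct (Rle_lt_or_eq_dec _ _ (nsq_ge0 hH x0)) as [p|z]; auto.
    exfalso. assert (x0 = z0) by (apply (ip_def hH); symmetry; exact z).
    subst. unfold f in fx0. rewrite (ip0r hH) in fx0. simpl in fx0. lra. }
  destruct (normalize x0 nx0) as [u0 [U0 Fu0]].
  assert (fu0 : f u0 < 0).
  { rewrite Fu0. unfold Rdiv. apply Rmult_neg_pos; auto. apply Rinv_0_lt_compat; auto. }
  set (E := fun r => exists x, nsq x = 1 /\ r = - f x).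
  assert (bE : bound E).
  { exists (Rabs MS + Rabs MX). intros r [x [U ->]]. apply f_abs_le; auto. }
  assert (nE : exists r, E r) by (exists (- f u0); exists u0; auto).
  destruct (completeness E bE nE) as [L [Lub Lleast]].
  set (mu := - L).
  assert (mu_neg : mu < 0).
  { unfold mu. assert (- f u0 <= L) by (apply Lub; exists u0; auto). lra. }
  assert (fge : forall y, mu * nsq y <= f y).
  { intro y. destruct (Rle_lt_or_eq_dec _ _ (nsq_ge0 hH y)) as [p|z].
    - destruct (normalize y p) as [u [U Fu]].
      assert (- f u <= L) by (apply Lub; exists u; auto).
      rewrite Fu in H0. unfold mu.
      assert (f y = (f y / nsq y) * nsq y) by (field; lra).
      rewrite H1. nra.
    - assert (y = z0) by (apply (ip_def hH); symmetry; exact z).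
      subst y. unfold f. rewrite (ip0r hH). rewrite <- z. simpl. lra. }
  assert (near : forall d, 0 < d -> exists x, nsq x = 1 /\ f x < mu + d).
  { intros d dp. apply NNPP. intro Hn.
    assert (is_upper_bound E (L - d)).
    { intros r [x [U ->]]. apply Rnot_lt_le. intro Hc. apply Hn. exists x. split; auto.
      unfold mu. lra. }
    apply Lleast in H0. lra. }
  set (K := fun x => vsub o (D x) (sc (RC mu) x)).
  assert (KL : linear_op o K).
  { split; intros; unfold K.
    - rewrite (lin_add _ _ D_lin). vsolve hH.
    - rewrite (lin_scal _ _ D_lin). vsolve hH. }
  assert (KP : positive_op o K).
  { intro y. unfold K. rewrite (ipsubl hH), (ipSl hH). simpl.
    rewrite (herm_real y D_herm), (Im_ipxx hH). split. ring.
    pose proof (fge y). unfold f in H0. unfold nsq in H0. lra. }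
  set (MK := Rabs MS + Rabs MX + Rabs mu).
  assert (KB : bnd K MK).
  { intro y. unfold K. eapply Rle_trans. apply norm_sub_le.
    rewrite (norm_scalR hH). pose proof (D_bnd y). unfold MK. lra. }
  set (C := Rabs MS + Rabs MX + 1).
  assert (Cp : 0 < C) by (unfold C; pose proof (Rabs_pos MS); pose proof (Rabs_pos MX); lra).
  set (eta := mu * mu / (4 * C)).
  assert (etap : 0 < eta) by (unfold eta; apply Rdiv_lt_0_compat; nra).
  set (d := Rmin (- mu / 4) (eta * eta / (Rabs MK + 1))).
  assert (MKp : 0 <= Rabs MK) by apply Rabs_pos.
  assert (dp : 0 < d).
  { unfold d. apply Rmin_pos. lra. apply Rdiv_lt_0_compat; nra. }
  destruct (near d dp) as [x [Ux Fx]].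
  assert (nx1 : norm o x = 1) by (unfold norm; unfold nsq in Ux; rewrite Ux; apply sqrt_1).
  pose proof (key_bound x KL KP KB) as KBx.
  assert (ReK : Re (ipo (K x) x) = f x - mu).
  { unfold K, f. rewrite (ipsubl hH), (ipSl hH). simpl. unfold nsq in Ux. rewrite Ux.
    rewrite (Im_ipxx hH). ring. }
  rewrite ReK in KBx.
  assert (d1 : d <= - mu / 4) by apply Rmin_l.
  assert (d2 : d <= eta * eta / (Rabs MK + 1)) by apply Rmin_r.
  assert (nK : nsq (K x) <= eta * eta).
  { assert (Rabs MK * d <= eta * eta).
    { apply Rle_trans with ((Rabs MK + 1) * d). nra.
      apply Rmult_le_compat_l with (r := Rabs MK + 1) in d2; [|lra].
      replace ((Rabs MK + 1) * (eta * eta / (Rabs MK + 1))) with (eta * eta) in d2 by (field; lra).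
      exact d2. }
    assert (0 <= f x - mu) by (pose proof (fge x); rewrite Ux in H1; lra).
    nra. }
  set (n := norm o (K x)).
  assert (n0 : 0 <= n) by apply (norm_ge0 o).
  assert (nle : n <= eta).
  { pose proof (norm_sq hH (K x)). fold n in H0. nra. }
  assert (Id : ad (S (D x)) (D (X x)) = z0).
  { unfold D. rewrite (lin_sub hH _ _ SL), SX. vsolve hH. }
  assert (Dx : D x = ad (K x) (sc (RC mu) x)) by (unfold K; vsolve hH).
  assert (Id2 : Re (ipo (S (D x)) x) + Re (ipo (D (X x)) x) = 0).
  { assert (Re (ipo (ad (S (D x)) (D (X x))) x) = 0) by (rewrite Id, (ip0l hH); reflexivity).
    rewrite (ipAl hH) in H0. simpl in H0. exact H0. }
  rewrite (pos_herm hH SL SP (D x) x), (D_herm (X x) x) in Id2.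
  rewrite Dx in Id2. rewrite (ipAl hH), (ipAr hH), (ipSl hH), (ipSr hH) in Id2. simpl in Id2.
  rewrite (Re_ipC hH (S x) x) in Id2.
  replace (0 * Im (ipo x (S x))) with 0 in Id2 by ring.
  replace (- 0 * Im (ipo (X x) x)) with 0 in Id2 by ring.
  set (a := Re (ipo (S x) x)) in *. set (b := Re (ipo (X x) x)) in *.
  assert (a0 : 0 <= a) by apply (proj2 (SP x)).
  assert (e1 : Rabs (Re (ipo (K x) (S x))) <= n * Rabs MS).
  { eapply Rle_trans. apply (absRe_le_norm hH). pose proof (bnd_abs SB x). rewrite nx1 in *.
    fold n. pose proof (norm_ge0 o (S x)). nra. }
  assert (e2 : Rabs (Re (ipo (X x) (K x))) <= n * Rabs MX).
  { eapply Rle_trans. apply (absRe_le_norm hH). pose proof (bnd_abs XB x). rewrite nx1 in *.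
    fold n. pose proof (norm_ge0 o (X x)). nra. }
  assert (fxe : f x = a - b).
  { unfold f, D. rewrite (ipsubl hH). simpl. unfold a, b. ring. }
  pose proof (Rabs_maj2 (Re (ipo (K x) (S x)))). pose proof (Rabs_maj2 (Re (ipo (X x) (K x)))).
  assert (ab : - mu * (a + b) <= n * C).
  { pose proof (Rle_abs (Re (ipo (K x) (S x)))). pose proof (Rle_abs (Re (ipo (X x) (K x)))).
    unfold C. lra. }
  assert (etaC : eta * C = mu * mu / 4) by (unfold eta; field; lra).
  assert (ab2 : - mu * (a + b) <= - mu * (- mu / 4)).
  { assert (n * C <= eta * C) by nra. lra. }
  assert (ab3 : a + b <= - mu / 4).
  { apply Rmult_le_reg_l with (- mu); lra. }
  lra.
Qed.

End SqrtGe.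
End Ops.

Lemma small_eq a b : (forall e, 0 < e -> Rabs (a - b) <= e) -> a = b.
Proof.
  intros Hs. destruct (Req_dec (a - b) 0). lra.
  exfalso. pose proof (Rabs_pos_lt _ H). specialize (Hs (Rabs (a - b) / 2)). lra.
Qed.

Lemma sqrt_lt_eps v e : 0 < e -> v < e * e -> sqrt v < e.
Proof.
  intros ep Hv. destruct (Rle_or_lt v 0).
  - rewrite sqrt_neg_0 by lra. lra.
  - rewrite <- (sqrt_square e) by lra. apply sqrt_lt_1_alt. lra.
Qed.

Section Conv.
Variable H : Type.
Variable o : HOps H.
Hypothesis hH : is_CHilbert o.

Notation ad := (vadd o).
Notation sc := (vscal o).
Notation z0 := (vzero o).
Notation op := (vopp o).
Notation ipo := (ip o).
Notation nsq := (nsq o).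

Lemma sub_zero_eq x y : vsub o x y = z0 -> x = y.
Proof.
  intro Z. unfold vsub in Z.
  rewrite <- (vadd_0 hH x), <- (vadd_opp hH y), (vadd_comm hH y (op y)), (vadd_assoc hH), Z.
  apply (add0l hH).
Qed.

Lemma norm0_eq x y : norm o (vsub o x y) = 0 -> x = y.
Proof.
  intro N. apply sub_zero_eq. apply (ip_def hH).
  change (nsq (vsub o x y) = 0). rewrite <- (norm_sq hH). rewrite N. ring.
Qed.

Lemma norm_sub_sym x y : norm o (vsub o x y) = norm o (vsub o y x).
Proof. unfold norm. fold (nsq (vsub o x y)). fold (nsq (vsub o y x)). rewrite !(nsq_sub hH).
  rewrite (Re_ipC hH x y). f_equal. ring. Qed.

Lemma absIm_le_norm x y : Rabs (Im (ipo x y)) <= norm o x * norm o y.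
Proof.
  pose proof (CS hH x y). unfold c2 in H0.
  rewrite <- sqrt_Rsqr_abs. unfold Rsqr. unfold norm. rewrite <- sqrt_mult by apply (nsq_ge0 hH).
  apply sqrt_le_1_alt. fold (nsq x). fold (nsq y). nra.
Qed.

Lemma cv_unique u l1 l2 : cv_to o u l1 -> cv_to o u l2 -> l1 = l2.
Proof.
  intros C1 C2. apply norm0_eq. apply small_eq. intros e ep.
  destruct (C1 (e/2)) as [N1 h1]; [lra|]. destruct (C2 (e/2)) as [N2 h2]; [lra|].
  specialize (h1 (max N1 N2) ltac:(lia)). specialize (h2 (max N1 N2) ltac:(lia)).
  set (w := u (max N1 N2)) in *.
  assert (E : vsub o l1 l2 = vsub o (vsub o w l2) (vsub o w l1)) by vsolve hH.
  rewrite E. pose proof (norm_sub_le hH (vsub o w l2) (vsub o w l1)).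
  pose proof (norm_ge0 o (vsub o (vsub o w l2) (vsub o w l1))).
  rewrite Rminus_0_r, Rabs_pos_eq by lra. lra.
Qed.

Lemma cv_add u v l m : cv_to o u l -> cv_to o v m -> cv_to o (fun n => ad (u n) (v n)) (ad l m).
Proof.
  intros C1 C2 e ep.
  destruct (C1 (e/2)) as [N1 h1]; [lra|]. destruct (C2 (e/2)) as [N2 h2]; [lra|].
  exists (max N1 N2). intros n Hn. specialize (h1 n ltac:(lia)). specialize (h2 n ltac:(lia)).
  assert (E : vsub o (ad (u n) (v n)) (ad l m) = ad (vsub o (u n) l) (vsub o (v n) m)) by vsolve hH.
  rewrite E. pose proof (norm_triangle hH (vsub o (u n) l) (vsub o (v n) m)). lra.
Qed.

Lemma cv_sub u v l m : cv_to o u l -> cv_to o v m -> cv_to o (fun n => vsub o (u n) (v n)) (vsub o l m).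
Proof.
  intros C1 C2 e ep.
  destruct (C1 (e/2)) as [N1 h1]; [lra|]. destruct (C2 (e/2)) as [N2 h2]; [lra|].
  exists (max N1 N2). intros n Hn. specialize (h1 n ltac:(lia)). specialize (h2 n ltac:(lia)).
  assert (E : vsub o (vsub o (u n) (v n)) (vsub o l m) = vsub o (vsub o (u n) l) (vsub o (v n) m)) by vsolve hH.
  rewrite E. pose proof (norm_sub_le hH (vsub o (u n) l) (vsub o (v n) m)). lra.
Qed.

Lemma norm_scal a x : norm o (sc a x) = sqrt (c2 a) * norm o x.
Proof. unfold norm. fold (nsq (sc a x)). rewrite (nsq_scal hH). apply sqrt_mult.
  unfold c2; nra. apply (nsq_ge0 hH). Qed.

Lemma cv_scal a u l : cv_to o u l -> cv_to o (fun n => sc a (u n)) (sc a l).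
Proof.
  intros C e ep.
  destruct (C (e / (sqrt (c2 a) + 1))) as [N h].
  { apply Rdiv_lt_0_compat; auto. pose proof (sqrt_pos (c2 a)); lra. }
  exists N. intros n Hn. specialize (h n Hn).
  assert (E : vsub o (sc a (u n)) (sc a l) = sc a (vsub o (u n) l)) by vsolve hH.
  rewrite E, norm_scal. pose proof (sqrt_pos (c2 a)).
  pose proof (norm_ge0 o (vsub o (u n) l)).
  apply Rle_lt_trans with ((sqrt (c2 a) + 1) * norm o (vsub o (u n) l)). nra.
  apply Rmult_lt_compat_l with (r := sqrt (c2 a) + 1) in h; [|lra].
  replace ((sqrt (c2 a) + 1) * (e / (sqrt (c2 a) + 1))) with e in h by (field; lra). exact h.
Qed.

Lemma cv_shift u l : cv_to o u l -> cv_to o (fun n => u (S n)) l.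
Proof. intros C e ep. destruct (C e ep) as [N h]. exists N. intros n Hn. apply h. lia. Qed.

Lemma cv_const l : cv_to o (fun _ => l) l.
Proof. intros e ep. exists 0%nat. intros. assert (vsub o l l = z0) by vsolve hH.
  rewrite H1. unfold norm. rewrite (ip0l hH). simpl. rewrite sqrt_0. lra. Qed.

Lemma cv_ext u v l : (forall n, u n = v n) -> cv_to o u l -> cv_to o v l.
Proof. intros E C. replace v with u; auto. apply functional_extensionality; auto. Qed.

Lemma Cx_small_eq (z w : Cx) : (forall e, 0 < e -> Rabs (Re z - Re w) <= e /\ Rabs (Im z - Im w) <= e) -> z = w.
Proof.
  intro Hs. apply Cx_eq; apply small_eq; intros e ep; apply Hs; auto.
Qed.

End Conv.

Section Sqrt.
Variable H : Type.
Variable o : HOps H.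
Hypothesis hH : is_CHilbert o.

Notation ad := (vadd o).
Notation sc := (vscal o).
Notation z0 := (vzero o).
Notation op := (vopp o).
Notation ipo := (ip o).
Notation nsq := (nsq o).

Variable P : H -> H.
Variable M : R.
Hypothesis PL : linear_op o P.
Hypothesis PP : positive_op o P.
Hypothesis PB : bnd o P M.

Let M' := Rabs M + 1.
Let c := / M'.

Lemma M'pos : 0 < M'.
Proof. unfold M'. pose proof (Rabs_pos M). lra. Qed.

Definition Tp x := vsub o x (sc (RC c) (P x)).

Lemma Tp_lin : linear_op o Tp.
Proof. split; intros; unfold Tp.
  - rewrite (lin_add _ _ PL). vsolve hH.
  - rewrite (lin_scal _ _ PL). vsolve hH. Qed.

Lemma Tp_herm : herm o Tp.
Proof. intros x y. unfold Tp. rewrite (ipsubl hH), (ipsubr hH), (ipSl hH), (ipSr hH).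
  rewrite (pos_herm hH PL PP). apply Cx_eq; simpl; ring. Qed.

Lemma Tp_nsq x : nsq (Tp x) <= nsq x.
Proof.
  unfold Tp. rewrite (nsq_sub hH), (nsq_scal hH). unfold c2; simpl.
  rewrite (ipSr hH). simpl. rewrite <- (Re_ipC hH x (P x)).
  pose proof (key_bound hH x PL PP PB) as K.
  pose proof (proj2 (PP x)) as P0.
  pose proof (herm_real hH x (pos_herm hH PL PP)) as I0.
  rewrite (Im_ipC hH (P x) x). rewrite I0.
  assert (c * c * nsq (P x) <= c * Re (ipo (P x) x)).
  { unfold c. assert (Rabs M <= M') by (unfold M'; lra). pose proof M'pos.
    assert (nsq (P x) <= M' * Re (ipo (P x) x)) by nra.
    assert (0 < / M') by (apply Rinv_0_lt_compat; lra).
    apply Rmult_le_compat_l with (r := / M' * / M') in H2; [|nra].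
    replace (/ M' * / M' * (M' * Re (ipo (P x) x))) with (/ M' * Re (ipo (P x) x)) in H2
      by (field; lra). lra. }
  assert (0 <= c) by (unfold c; left; apply Rinv_0_lt_compat, M'pos).
  nra.
Qed.

Lemma Tp_norm x : norm o (Tp x) <= norm o x.
Proof. unfold norm. apply sqrt_le_1_alt. apply Tp_nsq. Qed.

Fixpoint pw (k : nat) (x : H) : H := match k with O => x | S k => Tp (pw k x) end.

Lemma pw_lin k : linear_op o (pw k).
Proof.
  induction k; split; intros; simpl; auto.
  - rewrite (lin_add _ _ IHk). apply (lin_add _ _ Tp_lin).
  - rewrite (lin_scal _ _ IHk). apply (lin_scal _ _ Tp_lin).
Qed.


Lemma pw_add k l x : pw (k + l) x = pw k (pw l x).
Proof. induction k; simpl; auto. rewrite IHk. reflexivity. Qed.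

Lemma pw_comm k l x : pw k (pw l x) = pw l (pw k x).
Proof. rewrite <- !pw_add. rewrite Nat.add_comm. reflexivity. Qed.

Lemma pw_herm k : herm o (pw k).
Proof. induction k; intros x y; simpl; auto. rewrite Tp_herm, IHk.
  change (Tp (pw k y)) with (pw 1 (pw k y)). rewrite pw_comm. reflexivity. Qed.

Lemma pw_pos k x : 0 <= Re (ipo (pw k x) x).
Proof.
  destruct (Nat.Even_or_Odd k) as [[m ->]|[m ->]].
  - replace (2 * m)%nat with (m + m)%nat by lia. rewrite pw_add, pw_herm. apply (nsq_ge0 hH).
  - replace (2 * m + 1)%nat with (m + (1 + m))%nat by lia. rewrite pw_add, pw_herm.
    simpl. unfold Tp. rewrite (ipsubl hH), (ipSl hH). simpl.
    set (y := pw m x).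
    pose proof (key_bound hH y PL PP PB) as K.
    pose proof (proj2 (PP y)) as P0.
    pose proof (herm_real hH y (pos_herm hH PL PP)) as I0.
    pose proof (Re_le_norm hH (P y) y) as R1. pose proof (PB y) as B1.
    pose proof (norm_sq hH y) as Q1. pose proof (norm_ge0 o y). pose proof (norm_ge0 o (P y)).
    assert (Q2 : Re (ipo (P y) y) <= M' * nsq y).
    { unfold M'. pose proof (Rle_abs M). rewrite <- Q1.
      apply Rle_trans with (M * norm o y * norm o y). nra. nra. }
    rewrite I0. unfold c. pose proof M'pos.
    assert (Q3 : / M' * Re (ipo (P y) y) <= nsq y).
    { apply Rmult_le_reg_l with M'. lra. rewrite <- Rmult_assoc, Rinv_r, Rmult_1_l; lra. }
    unfold nsq in Q3. lra.
Qed.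

Definition ev (L : list (R * nat)) (x : H) : H :=
  fold_right (fun p acc => ad (sc (RC (fst p)) (pw (snd p) x)) acc) z0 L.

Definition nonneg (L : list (R * nat)) := Forall (fun p => 0 <= fst p) L.

Lemma ev_nil x : ev nil x = z0.
Proof. reflexivity. Qed.
Lemma ev_cons p L x : ev (p :: L) x = ad (sc (RC (fst p)) (pw (snd p) x)) (ev L x).
Proof. reflexivity. Qed.

Lemma ev_app L1 L2 x : ev (L1 ++ L2) x = ad (ev L1 x) (ev L2 x).
Proof. induction L1; simpl. rewrite (add0l hH). auto. fold (ev (L1 ++ L2) x) (ev L1 x). rewrite IHL1. vsolve hH. Qed.

Lemma ev_lin L : linear_op o (ev L).
Proof.
  induction L; split; intros; simpl.
  - vsolve hH.
  - vsolve hH.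
  - fold (ev L (ad x y)) (ev L x) (ev L y). rewrite (lin_add _ _ IHL), (lin_add _ _ (pw_lin _)). vsolve hH.
  - fold (ev L (sc a0 x)) (ev L x). rewrite (lin_scal _ _ IHL), (lin_scal _ _ (pw_lin _)). vsolve hH.
Qed.

Lemma ev_herm L : herm o (ev L).
Proof.
  induction L; intros x y; simpl.
  - rewrite (ip0l hH), (ip0r hH). reflexivity.
  - fold (ev L x) (ev L y). rewrite (ipAl hH), (ipAr hH), (ipSl hH), (ipSr hH), IHL, pw_herm.
    apply Cx_eq; simpl; ring.
Qed.

Lemma ev_pos L x : nonneg L -> 0 <= Re (ipo (ev L x) x).
Proof.
  induction 1; simpl.
  - rewrite (ip0l hH). simpl. lra.
  - fold (ev l x). rewrite (ipAl hH), (ipSl hH). simpl.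
    rewrite (herm_real hH x (pw_herm (snd x0))). pose proof (pw_pos (snd x0) x). nra.
Qed.

Lemma ev_posop L : nonneg L -> positive_op o (ev L).
Proof. intros N x. split. apply (herm_real hH x (ev_herm L)). apply ev_pos; auto. Qed.

Definition scl (a : R) (L : list (R * nat)) := map (fun p => (a * fst p, snd p)) L.
Definition mul (L1 L2 : list (R * nat)) :=
  flat_map (fun p => map (fun q => (fst p * fst q, (snd p + snd q)%nat)) L2) L1.

Lemma ev_scl a L x : ev (scl a L) x = sc (RC a) (ev L x).
Proof. induction L; simpl. vsolve hH. fold (ev L x) (ev (scl a L) x). rewrite IHL. vsolve hH. Qed.

Lemma ev_mul1 a k L x : ev (map (fun q => (a * fst q, (k + snd q)%nat)) L) x = sc (RC a) (pw k (ev L x)).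
Proof.
  induction L; simpl.
  - rewrite (lin_zero hH (pw_lin k)). vsolve hH.
  - fold (ev L x). rewrite IHL, (lin_add _ _ (pw_lin k)), (lin_scal _ _ (pw_lin k)), pw_add. vsolve hH.
Qed.

Lemma ev_mul L1 L2 x : ev (mul L1 L2) x = ev L1 (ev L2 x).
Proof.
  induction L1; simpl. reflexivity.
  unfold mul in *. simpl. rewrite ev_app, ev_mul1. fold (ev L1 (ev L2 x)). rewrite IHL1. reflexivity.
Qed.

Lemma nonneg_app L1 L2 : nonneg L1 -> nonneg L2 -> nonneg (L1 ++ L2).
Proof. intros; apply Forall_app; auto. Qed.
Lemma nonneg_scl a L : 0 <= a -> nonneg L -> nonneg (scl a L).
Proof. intros a0 N. unfold scl, nonneg. apply Forall_map. eapply Forall_impl; [|exact N]. simpl; intros; nra. Qed.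
Lemma nonneg_mul L1 L2 : nonneg L1 -> nonneg L2 -> nonneg (mul L1 L2).
Proof.
  intros N1 N2. unfold mul, nonneg. apply Forall_flat_map.
  eapply Forall_impl; [|exact N1]. intros p p0. apply Forall_map.
  eapply Forall_impl; [|exact N2]. simpl; intros; nra.
Qed.

Lemma pw_ev k L x : pw k (ev L x) = ev L (pw k x).
Proof.
  induction L; simpl. apply (lin_zero hH (pw_lin k)).
  fold (ev L x) (ev L (pw k x)). rewrite (lin_add _ _ (pw_lin k)), (lin_scal _ _ (pw_lin k)), IHL, pw_comm.
  reflexivity.
Qed.

Lemma ev_comm L1 L2 x : ev L1 (ev L2 x) = ev L2 (ev L1 x).
Proof.
  induction L1; simpl. rewrite (lin_zero hH (ev_lin L2)). reflexivity.
  fold (ev L1 (ev L2 x)) (ev L1 x). rewrite IHL1, pw_ev.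
  rewrite (lin_add _ _ (ev_lin L2)), (lin_scal _ _ (ev_lin L2)). reflexivity.
Qed.

Fixpoint Zl (n : nat) : list (R * nat) :=
  match n with
  | O => nil
  | S n => (1/2, 1%nat) :: scl (1/2) (mul (Zl n) (Zl n))
  end.

Definition Z n x := ev (Zl n) x.

Lemma Z_S n x : Z (S n) x = ad (sc (RC (1/2)) (Tp x)) (sc (RC (1/2)) (Z n (Z n x))).
Proof. unfold Z. simpl. fold (ev (scl (1/2) (mul (Zl n) (Zl n))) x). rewrite ev_scl, ev_mul. reflexivity. Qed.

Lemma Z_norm n x : norm o (Z n x) <= norm o x.
Proof.
  revert x. induction n; intro x.
  - unfold Z; simpl. unfold norm. rewrite (ip0l hH). simpl. rewrite sqrt_0. apply (norm_ge0 o).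
  - rewrite Z_S. eapply Rle_trans. apply (norm_triangle hH).
    rewrite !(norm_scalR hH). pose proof (Tp_norm x). pose proof (IHn (Z n x)). pose proof (IHn x).
    rewrite Rabs_pos_eq by lra. lra.
Qed.

Lemma Zl_nonneg n : nonneg (Zl n).
Proof. induction n; simpl. constructor. constructor. simpl; lra.
  apply nonneg_scl. lra. apply nonneg_mul; auto. Qed.

Lemma Z_incr n : exists L, nonneg L /\ forall x, Z (S n) x = ad (Z n x) (ev L x).
Proof.
  induction n.
  - exists ((1/2, 1%nat) :: nil). split. repeat constructor; simpl; lra.
    intro x. rewrite Z_S. unfold Z; simpl. vsolve hH.
  - destruct IHn as [L [NL EL]].
    exists (scl (1/2) (mul (Zl n) L ++ mul L (Zl n) ++ mul L L)). split.
    + apply nonneg_scl. lra. apply nonneg_app. apply nonneg_mul; auto. apply Zl_nonneg.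
      apply nonneg_app; apply nonneg_mul; auto. apply Zl_nonneg.
    + intro x. rewrite (Z_S (S n) x).
      set (w := Z (S n) x).
      assert (W1 : w = ad (Z n x) (ev L x)) by apply EL.
      assert (W2 : w = ad (sc (RC (1/2)) (Tp x)) (sc (RC (1/2)) (Z n (Z n x)))) by apply Z_S.
      rewrite (EL w). rewrite W1 at 1 2. rewrite W2.
      rewrite ev_scl, !ev_app, !ev_mul. unfold Z.
      rewrite (lin_add _ _ (ev_lin (Zl n))), (lin_add _ _ (ev_lin L)). vsolve hH.
Qed.


Lemma Z_lin n : linear_op o (Z n).
Proof. apply ev_lin. Qed.
Lemma Z_herm n : herm o (Z n).
Proof. apply ev_herm. Qed.

Definition av n x := Re (ipo (Z n x) x).

Lemma av_incr n x : av n x <= av (S n) x.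
Proof.
  destruct (Z_incr n) as [L [NL EL]]. unfold av. rewrite EL, (ipAl hH). simpl.
  pose proof (ev_pos x NL). lra.
Qed.

Lemma av_mono n m x : (n <= m)%nat -> av n x <= av m x.
Proof. induction 1. lra. pose proof (av_incr m x). lra. Qed.

Lemma av_bound n x : av n x <= nsq x.
Proof.
  unfold av. eapply Rle_trans. apply (Re_le_norm hH). rewrite <- (norm_sq hH).
  pose proof (Z_norm n x). pose proof (norm_ge0 o x). pose proof (norm_ge0 o (Z n x)). nra.
Qed.

Lemma diff_bound n m x : (n <= m)%nat -> nsq (vsub o (Z m x) (Z n x)) <= 2 * (av m x - av n x).
Proof.
  intros nm. set (G := fun y => vsub o (Z m y) (Z n y)).
  assert (GL : linear_op o G).
  { split; intros; unfold G.
    - rewrite (lin_add _ _ (Z_lin m)), (lin_add _ _ (Z_lin n)). vsolve hH.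
    - rewrite (lin_scal _ _ (Z_lin m)), (lin_scal _ _ (Z_lin n)). vsolve hH. }
  assert (GP : positive_op o G).
  { intro y. unfold G. rewrite (ipsubl hH). simpl.
    rewrite (herm_real hH y (Z_herm m)), (herm_real hH y (Z_herm n)). split. ring.
    pose proof (av_mono y nm). unfold av in H0. lra. }
  assert (GB : bnd o G 2).
  { intro y. unfold G. eapply Rle_trans. apply (norm_sub_le hH).
    pose proof (Z_norm m y). pose proof (Z_norm n y). lra. }
  pose proof (key_bound hH x GL GP GB) as K. unfold G in K. rewrite (ipsubl hH) in K. simpl in K.
  rewrite Rabs_pos_eq in K by lra. unfold av. lra.
Qed.

Lemma Z_cauchy x : cauchy o (fun n => Z n x).
Proof.
  intros e ep.
  assert (gr : Un_growing (fun n => av n x)) by (intro n; apply av_incr).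
  assert (ub : has_ub (fun n => av n x)).
  { exists (nsq x). intros r [n ->]. apply av_bound. }
  destruct (growing_cv _ gr ub) as [l Hl].
  destruct (Hl (e * e / 4)) as [N HN]. { apply Rdiv_lt_0_compat; nra. }
  exists N. intros n m Hn Hm.
  assert (forall n m, (n >= N)%nat -> (m >= N)%nat -> (n <= m)%nat -> norm o (vsub o (Z m x) (Z n x)) < e).
  { intros p q Hp Hq pq. unfold norm. apply sqrt_lt_eps; auto.
    pose proof (diff_bound x pq). pose proof (HN p Hp). pose proof (HN q Hq).
    unfold Rdist in *. pose proof (Rle_abs (av q x - l)). pose proof (Rabs_maj2 (av p x - l)).
    change (nsq (vsub o (Z q x) (Z p x)) < e * e). lra. }
  destruct (Nat.le_gt_cases n m).
  - rewrite (norm_sub_sym hH). apply H0; auto.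
  - apply H0; auto. lia.
Qed.

Definition Zlim x : H := proj1_sig (constructive_indefinite_description _ (complete hH (Z_cauchy x))).

Lemma Zlim_cv x : cv_to o (fun n => Z n x) (Zlim x).
Proof. unfold Zlim. destruct (constructive_indefinite_description _ _). simpl. auto. Qed.

Lemma Zlim_add x y : Zlim (ad x y) = ad (Zlim x) (Zlim y).
Proof.
  apply (cv_unique hH (Zlim_cv (ad x y))).
  eapply (cv_ext). 2: apply (cv_add hH (Zlim_cv x) (Zlim_cv y)).
  intro n. simpl. symmetry. apply (lin_add _ _ (Z_lin n)).
Qed.

Lemma Zlim_scal a x : Zlim (sc a x) = sc a (Zlim x).
Proof.
  apply (cv_unique hH (Zlim_cv (sc a x))).
  eapply (cv_ext). 2: apply (cv_scal hH a (Zlim_cv x)).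
  intro n. simpl. symmetry. apply (lin_scal _ _ (Z_lin n)).
Qed.

Lemma Zlim_sub x y : Zlim (vsub o x y) = vsub o (Zlim x) (Zlim y).
Proof.
  unfold vsub. replace (op y) with (sc (RC (-1)) y) by vsolve hH.
  rewrite Zlim_add, Zlim_scal. vsolve hH.
Qed.

Lemma Zlim_herm : herm o Zlim.
Proof.
  intros x y. apply Cx_small_eq. intros e ep.
  set (K := norm o x + norm o y + 1).
  assert (Kp : 0 < K) by (unfold K; pose proof (norm_ge0 o x); pose proof (norm_ge0 o y); lra).
  destruct ((Zlim_cv x : cv_to o _ _) (e / (2 * K))) as [N1 h1]. apply Rdiv_lt_0_compat; lra.
  destruct ((Zlim_cv y : cv_to o _ _) (e / (2 * K))) as [N2 h2]. apply Rdiv_lt_0_compat; lra.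
  specialize (h1 (max N1 N2) ltac:(lia)). specialize (h2 (max N1 N2) ltac:(lia)).
  set (n := max N1 N2) in *.
  assert (E : Cadd (ipo (Zlim x) y) (Cmul (RC (-1)) (ipo x (Zlim y))) =
              Cadd (ipo (vsub o (Zlim x) (Z n x)) y) (ipo x (vsub o (Z n y) (Zlim y)))).
  { rewrite (ipsubl hH), (ipsubr hH), (Z_herm n). apply Cx_eq; simpl; ring. }
  assert (F : forall f : Cx -> R, (forall a b, f (Cadd a b) = f a + f b) ->
     (forall a, f (Cmul (RC (-1)) a) = - f a) ->
     (forall u v, Rabs (f (ipo u v)) <= norm o u * norm o v) ->
     Rabs (f (ipo (Zlim x) y) - f (ipo x (Zlim y))) <= e).
  { intros f fA fN fB.
    assert (f (ipo (Zlim x) y) - f (ipo x (Zlim y)) =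
            f (ipo (vsub o (Zlim x) (Z n x)) y) + f (ipo x (vsub o (Z n y) (Zlim y)))).
    { rewrite <- fA, <- E, fA, fN. ring. }
    rewrite H0. eapply Rle_trans. apply Rabs_triang.
    pose proof (fB (vsub o (Zlim x) (Z n x)) y). pose proof (fB x (vsub o (Z n y) (Zlim y))).
    rewrite (norm_sub_sym hH) in H1.
    pose proof (norm_ge0 o x). pose proof (norm_ge0 o y).
    pose proof (norm_ge0 o (vsub o (Z n x) (Zlim x))). pose proof (norm_ge0 o (vsub o (Z n y) (Zlim y))).
    assert (norm o (vsub o (Z n x) (Zlim x)) * norm o y <= e / (2 * K) * K).
    { apply Rmult_le_compat; try lra. unfold K; lra. }
    assert (norm o x * norm o (vsub o (Z n y) (Zlim y)) <= K * (e / (2 * K))).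
    { apply Rmult_le_compat; try lra. unfold K; lra. }
    assert (e / (2 * K) * K = e / 2) by (field; lra).
    lra. }
  split.
  - apply F. reflexivity. intros; simpl; ring. apply (absRe_le_norm hH).
  - apply F. reflexivity. intros; simpl; ring. apply (absIm_le_norm hH).
Qed.

Lemma cv_ZZ x : cv_to o (fun n => Z n (Z n x)) (Zlim (Zlim x)).
Proof.
  intros e ep.
  destruct ((Zlim_cv x : cv_to o _ _) (e/2)) as [N1 h1]. lra.
  destruct ((Zlim_cv (Zlim x) : cv_to o _ _) (e/2)) as [N2 h2]. lra.
  exists (max N1 N2). intros n Hn. specialize (h1 n ltac:(lia)). specialize (h2 n ltac:(lia)).
  assert (E : vsub o (Z n (Z n x)) (Zlim (Zlim x)) =
              ad (Z n (vsub o (Z n x) (Zlim x))) (vsub o (Z n (Zlim x)) (Zlim (Zlim x)))).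
  { rewrite (lin_sub hH _ _ (Z_lin n)). vsolve hH. }
  rewrite E. eapply Rle_lt_trans. apply (norm_triangle hH).
  pose proof (Z_norm n (vsub o (Z n x) (Zlim x))). lra.
Qed.

Lemma Zlim_fix x : Zlim x = ad (sc (RC (1/2)) (Tp x)) (sc (RC (1/2)) (Zlim (Zlim x))).
Proof.
  apply (cv_unique hH (cv_shift (Zlim_cv x))).
  eapply cv_ext. 2: apply (cv_add hH (cv_const hH (sc (RC (1/2)) (Tp x))) (cv_scal hH (RC (1/2)) (cv_ZZ x))).
  intro n. simpl. symmetry. apply Z_S.
Qed.

Let r := sqrt M'.
Definition W x := sc (RC r) (vsub o x (Zlim x)).

Lemma W_herm : herm o W.
Proof.
  intros x y. unfold W. rewrite (ipSl hH), (ipSr hH), (ipsubl hH), (ipsubr hH), Zlim_herm.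
  apply Cx_eq; simpl; ring.
Qed.

Lemma W_sq x : W (W x) = P x.
Proof.
  assert (ZZ : Zlim (Zlim x) = vsub o (sc (RC 2) (Zlim x)) (Tp x)).
  { apply (vec_ext hH). intro z. pose proof (f_equal (fun v => ipo v z) (Zlim_fix x)) as F. simpl in F.
    rewrite (ipAl hH), !(ipSl hH) in F. rewrite (ipsubl hH), (ipSl hH).
    destruct (ipo (Zlim (Zlim x)) z) as [a b]. destruct (ipo (Zlim x) z) as [c1 d1].
    destruct (ipo (Tp x) z) as [e1 f1]. unfold Cadd, Cmul in *; simpl in *. injection F; intros.
    apply Cx_eq; simpl; lra. }
  assert (E1 : W (W x) = sc (RC (r * r)) (ad (vsub o x (sc (RC 2) (Zlim x))) (Zlim (Zlim x)))).
  { unfold W. rewrite Zlim_scal, Zlim_sub. vsolve hH. }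
  rewrite E1, ZZ. unfold Tp.
  assert (E2 : ad (vsub o x (sc (RC 2) (Zlim x))) (vsub o (sc (RC 2) (Zlim x)) (vsub o x (sc (RC c) (P x))))
               = sc (RC c) (P x)) by vsolve hH.
  rewrite E2, (vscal_assoc hH).
  assert (Cmul (RC (r * r)) (RC c) = Defs.C1).
  { unfold r, c. rewrite sqrt_sqrt by (pose proof M'pos; lra). apply Cx_eq; simpl.
    field. pose proof M'pos; lra. ring. }
  rewrite H0. apply (vscal_1 hH).
Qed.

End Sqrt.

Lemma sqrt_exists (H : Type) (o : HOps H) (hH : is_CHilbert o) (P : H -> H) M :
  linear_op o P -> positive_op o P -> bnd o P M ->
  exists W, herm o W /\ forall x, W (W x) = P x.
Proof.
  intros PL PP PB. exists (W hH PL PP PB). split. apply W_herm. apply W_sq.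
Qed.


Definition sumI {I : Type} (f : I -> R) (l : list I) : R := fold_right (fun i acc => f i + acc) 0 l.

Lemma sumI_app {I} (f : I -> R) l1 l2 : sumI f (l1 ++ l2) = sumI f l1 + sumI f l2.
Proof. induction l1; simpl. ring. unfold sumI in *. simpl. rewrite IHl1. ring. Qed.

Lemma sumI_ge0 {I} (f : I -> R) l : (forall i, 0 <= f i) -> 0 <= sumI f l.
Proof. intros. induction l; simpl. lra. unfold sumI in *; simpl. specialize (H a). lra. Qed.

Lemma sumI_incl {I} (f : I -> R) (l1 l2 : list I) : (forall i, 0 <= f i) ->
  NoDup l1 -> incl l1 l2 -> sumI f l1 <= sumI f l2.
Proof.
  intros F N. revert l2. induction N as [|a l1 Na N IH]; intros l2 Inc.
  - simpl. apply sumI_ge0; auto.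
  - assert (In a l2) by (apply Inc; left; auto).
    destruct (in_split _ _ H) as [l2a [l2b ->]].
    rewrite sumI_app. simpl. unfold sumI at 1. simpl. fold (sumI f l1).
    assert (sumI f l1 <= sumI f (l2a ++ l2b)).
    { apply IH. intros x Hx. assert (In x (l2a ++ a :: l2b)) by (apply Inc; right; auto).
      apply in_app_or in H0. apply in_or_app. destruct H0 as [h|[h|h]]; auto.
      subst; contradiction. }
    rewrite sumI_app in H0. unfold sumI at 3. simpl. fold (sumI f l2b). lra.
Qed.

Lemma sumI_ext {I} (f g : I -> R) l : (forall i, In i l -> f i = g i) -> sumI f l = sumI g l.
Proof. induction l; simpl; intros; auto. unfold sumI in *; simpl. rewrite H, IHl; auto. Qed.

Lemma sumI_map {I J} (f : J -> R) (g : I -> J) l : sumI f (map g l) = sumI (fun i => f (g i)) l.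
Proof. induction l; simpl; auto. unfold sumI in *; simpl. rewrite IHl. auto. Qed.

Section Bessel.
Variable H : Type.
Variable o : HOps H.
Hypothesis hH : is_CHilbert o.

Notation ad := (vadd o).
Notation sc := (vscal o).
Notation z0 := (vzero o).
Notation op := (vopp o).
Notation ipo := (ip o).
Notation nsq := (nsq o).

Inductive ON : list H -> Prop :=
| ON_nil : ON nil
| ON_cons h hs : ipo h h = Defs.C1 -> (forall g, In g hs -> ipo g h = C0) -> ON hs -> ON (h :: hs).

Definition projv (hs : list H) (y : H) : H :=
  fold_right (fun h acc => ad (sc (ipo y h) h) acc) z0 hs.

Lemma ON_orth hs g h : ON hs -> In g hs -> In h hs -> g <> h -> ipo g h = C0.
Proof.
  induction 1; simpl; intros Ig Ih gh. contradiction.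
  destruct Ig as [<-|Ig]; destruct Ih as [<-|Ih].
  - contradiction.
  - rewrite (ipC hH). rewrite H1 by auto. apply Cx_eq; simpl; ring.
  - apply H1; auto.
  - apply IHON; auto.
Qed.

Lemma projv_orth hs y z : (forall g, In g hs -> ipo g z = C0) -> ipo (projv hs y) z = C0.
Proof.
  induction hs; simpl; intros Hz. apply (ip0l hH).
  rewrite (ipAl hH), (ipSl hH), Hz by auto. rewrite IHhs. apply Cx_eq; simpl; ring.
  intros; apply Hz; auto.
Qed.

Lemma projv_in hs y g : ON hs -> In g hs -> ipo (projv hs y) g = ipo y g.
Proof.
  intros O. induction O as [|h hs Hh Ho O IHO]; simpl; intros Ig. contradiction.
  destruct Ig as [Eg|Ig].
  - subst g. rewrite (ipAl hH), (ipSl hH), Hh, projv_orth by auto. apply Cx_eq; simpl; ring.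
  - rewrite (ipAl hH), (ipSl hH), IHO by auto. rewrite (ipC hH g h). rewrite (Ho g Ig). apply Cx_eq; simpl; ring.
Qed.

Definition sumc2 (hs : list H) (y : H) := sumI (fun h => c2 (ipo y h)) hs.

Lemma projv_Re hs y z : (forall h, In h hs -> ipo h z = Cconj (ipo y h)) ->
  Re (ipo (projv hs y) z) = sumc2 hs y.
Proof.
  induction hs; simpl; intros Hz. rewrite (ip0l hH). reflexivity.
  rewrite (ipAl hH), (ipSl hH), Hz by auto. simpl. rewrite IHhs by auto.
  unfold sumc2, sumI, c2. simpl. ring.
Qed.

Lemma bessel_eq hs y : ON hs -> nsq (vsub o y (projv hs y)) = nsq y - sumc2 hs y.
Proof.
  intros O. rewrite (nsq_sub hH).
  assert (A : Re (ipo (projv hs y) (projv hs y)) = sumc2 hs y).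
  { apply projv_Re. intros. rewrite (ipC hH), projv_in; auto. }
  assert (B : Re (ipo (projv hs y) y) = sumc2 hs y).
  { apply projv_Re. intros. apply (ipC hH). }
  unfold nsq at 2. rewrite A. rewrite (Re_ipC hH). rewrite B. ring.
Qed.

Lemma bessel hs y : ON hs -> sumc2 hs y <= nsq y.
Proof. intros O. pose proof (bessel_eq y O). pose proof (nsq_ge0 hH (vsub o y (projv hs y))). lra. Qed.

Lemma ON_map {I : Type} (e : I -> H) (l : list I) : onb o e -> NoDup l -> ON (map e l).
Proof.
  intros [E1 [E2 _]] N. induction N; simpl; constructor; auto.
  intros g Hg. apply in_map_iff in Hg. destruct Hg as [j [<- Hj]]. apply E2. intro; subst; contradiction.
Qed.

Lemma c2_zero z : c2 z = 0 -> z = C0.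
Proof. unfold c2. intros. apply Cx_eq; simpl; nra. Qed.

Lemma c2_ge0 z : 0 <= c2 z.
Proof. unfold c2; nra. Qed.

Lemma parseval {I : Type} (e : I -> H) y d : onb o e -> 0 < d ->
  exists l, NoDup l /\ nsq y - d < sumI (fun i => c2 (ipo y (e i))) l.
Proof.
  intros Ob dp. pose proof Ob as [E1 [E2 E3]].
  set (g := fun i => c2 (ipo y (e i))).
  assert (gpos : forall i, 0 <= g i) by (intro; apply c2_ge0).
  assert (bes : forall l, NoDup l -> sumI g l <= nsq y).
  { intros l N. pose proof (bessel y (ON_map Ob N)). unfold sumc2 in H0. rewrite sumI_map in H0. exact H0. }
  set (E := fun s => exists l, NoDup l /\ s = sumI g l).
  assert (bE : bound E) by (exists (nsq y); intros s [l [N ->]]; auto).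
  assert (nE : exists s, E s) by (exists 0; exists nil; split; [constructor|reflexivity]).
  destruct (completeness E bE nE) as [c [Cub Cleast]].
  assert (cle : c <= nsq y) by (apply Cleast; intros s [l [N ->]]; auto).
  assert (near : forall d, 0 < d -> exists l, NoDup l /\ c - d < sumI g l).
  { intros d0 d0p. apply NNPP. intro Hn.
    assert (is_upper_bound E (c - d0)).
    { intros s [l [N ->]]. apply Rnot_lt_le. intro. apply Hn. exists l. split; auto. }
    apply Cleast in H0. lra. }
  destruct (Rlt_or_le (nsq y - d) c) as [Hc|Hc].
  { destruct (near (c - (nsq y - d))) as [l [N Hl]]. lra. exists l. split; auto. lra. }
  exfalso.
  assert (pick : forall n : nat, {l | NoDup l /\ c - / INR (S n) < sumI g l}).
  { intro n. apply constructive_indefinite_description. apply near.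
    apply Rinv_0_lt_compat. apply lt_0_INR. lia. }
  set (dec := fun a b : I => excluded_middle_informative (a = b)).
  set (L := fix L (n : nat) : list I := match n with
            | O => proj1_sig (pick O)
            | S n => nodup dec (L n ++ proj1_sig (pick (S n))) end).
  assert (LN : forall n, NoDup (L n)).
  { intros [|n]; simpl. apply (proj2_sig (pick O)). apply NoDup_nodup. }
  assert (Linc : forall n m, (n <= m)%nat -> incl (L n) (L m)).
  { intros n m nm. induction nm. apply incl_refl.
    intros x Hx. simpl. apply nodup_In. apply in_or_app. left. auto. }
  assert (Lbig : forall n, c - / INR (S n) < sumI g (L n)).
  { intros [|n]. simpl. apply (proj2_sig (pick O)).
    destruct (proj2_sig (pick (S n))) as [N1 S1].
    eapply Rlt_le_trans. exact S1. apply sumI_incl; auto.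
    intros x Hx. simpl. apply nodup_In. apply in_or_app. right. auto. }
  assert (Lle : forall n, sumI g (L n) <= c) by (intro n; apply Cub; exists (L n); split; auto).
  set (u := fun n => projv (map e (L n)) y).
  assert (ONL : forall n, ON (map e (L n))) by (intro; apply ON_map; auto).
  assert (nsq_u_diff : forall n m, (n <= m)%nat -> nsq (vsub o (u m) (u n)) <= / INR (S n)).
  { intros n m nm.
    assert (A : Re (ipo (u m) (u m)) = sumI g (L m)).
    { unfold u. rewrite projv_Re with (hs := map e (L m)). unfold sumc2. rewrite sumI_map. reflexivity.
      intros h Hh. rewrite (ipC hH), projv_in; auto. }
    assert (B : Re (ipo (u n) (u n)) = sumI g (L n)).
    { unfold u. rewrite projv_Re with (hs := map e (L n)). unfold sumc2. rewrite sumI_map. reflexivity.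
      intros h Hh. rewrite (ipC hH), projv_in; auto. }
    assert (C : Re (ipo (u n) (u m)) = sumI g (L n)).
    { unfold u. rewrite projv_Re with (hs := map e (L n)). unfold sumc2. rewrite sumI_map. reflexivity.
      intros h Hh. rewrite (ipC hH), projv_in; auto. apply in_map_iff in Hh. destruct Hh as [j [<- Hj]].
      apply in_map. apply (Linc n m nm). auto. }
    rewrite (nsq_sub hH). unfold nsq. rewrite A, B, (Re_ipC hH), C.
    pose proof (Lbig n). pose proof (Lle m). lra. }
  assert (ucau : cauchy o u).
  { intros eps ep.
    assert (Q0 : 0 < / (eps * eps)) by (apply Rinv_0_lt_compat; nra).
    destruct (INR_unbounded (/ (eps * eps))) as [N HN].
    exists N. intros n m Hn Hm.
    assert (K : forall n m, (N <= n)%nat -> (n <= m)%nat -> norm o (vsub o (u m) (u n)) < eps).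
    { intros p q Np pq. unfold norm. apply sqrt_lt_eps; auto.
      eapply Rle_lt_trans. apply nsq_u_diff; auto.
      assert (Q1 : INR N <= INR (S p)) by (apply le_INR; lia).
      assert (Q2 : / (eps * eps) < INR (S p)) by lra.
      apply Rinv_lt_contravar in Q2. rewrite Rinv_inv in Q2. exact Q2.
      apply Rmult_lt_0_compat; auto. lra. }
    destruct (Nat.le_gt_cases n m).
    - rewrite (norm_sub_sym hH). apply K; auto.
    - apply K; auto. lia. }
  destruct (complete hH ucau) as [z zlim].
  assert (yz : y = z).
  { symmetry. apply (sub_zero_eq hH). apply E3. intro i.
    rewrite (ipsubl hH).
    assert (Ez : ipo z (e i) = ipo y (e i)).
    { destruct (classic (exists N, In i (L N))) as [[N HN]|NN].
      - apply Cx_small_eq. intros eps ep.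
        destruct (zlim eps ep) as [N2 h2]. specialize (h2 (max N N2) ltac:(lia)).
        assert (G0 : ipo (u (max N N2)) (e i) = ipo y (e i)).
        { unfold u. apply projv_in; auto. apply in_map. apply (Linc N); auto. lia. }
        pose proof (absRe_le_norm hH (vsub o (u (max N N2)) z) (e i)) as G1.
        pose proof (absIm_le_norm hH (vsub o (u (max N N2)) z) (e i)) as G2.
        assert (G3 : norm o (e i) = 1) by (unfold norm; rewrite E1; simpl; apply sqrt_1).
        rewrite (ipsubl hH), G0 in G1, G2. simpl in G1, G2. rewrite G3 in G1, G2.
        rewrite <- Rabs_Ropp. replace (- (Re (ipo z (e i)) - Re (ipo y (e i)))) with
          (Re (ipo y (e i)) + (-1 * Re (ipo z (e i)) - 0 * Im (ipo z (e i)))) by ring.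
        split. lra.
        rewrite <- Rabs_Ropp. replace (- (Im (ipo z (e i)) - Im (ipo y (e i)))) with
          (Im (ipo y (e i)) + (-1 * Im (ipo z (e i)) + 0 * Re (ipo z (e i)))) by ring. lra.
      - assert (Z0 : forall n, ipo (u n) (e i) = C0).
        { intro n. unfold u. apply projv_orth. intros h Hh. apply in_map_iff in Hh.
          destruct Hh as [j [<- Hj]]. apply E2. intro; subst. apply NN. exists n; auto. }
        assert (Yz : ipo y (e i) = C0).
        { apply c2_zero. apply small_eq. intros eps ep. rewrite Rminus_0_r.
          rewrite Rabs_pos_eq by apply c2_ge0.
          destruct (INR_unbounded (/ eps)) as [n Hn].
          assert (W1 : NoDup (i :: L n)) by (constructor; auto; intro; apply NN; exists n; auto).
          assert (W2 : sumI g (i :: L n) <= c) by (apply Cub; exists (i :: L n); auto).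
          unfold sumI in W2; simpl in W2. fold (sumI g (L n)) in W2. pose proof (Lbig n) as W3.
          assert (W4 : / INR (S n) <= eps).
          { assert (0 < / eps) by (apply Rinv_0_lt_compat; auto).
            assert (INR n <= INR (S n)) by (apply le_INR; lia).
            rewrite <- (Rinv_inv eps). apply Rinv_le_contravar; auto. lra. }
          change (g i <= eps). lra. }
        rewrite Yz. apply Cx_small_eq. intros eps ep.
        destruct (zlim eps ep) as [N2 h2]. specialize (h2 N2 ltac:(lia)).
        pose proof (absRe_le_norm hH (vsub o (u N2) z) (e i)) as G0.
        pose proof (absIm_le_norm hH (vsub o (u N2) z) (e i)) as G1.
        assert (G2 : norm o (e i) = 1) by (unfold norm; rewrite E1; simpl; apply sqrt_1).
        rewrite (ipsubl hH), Z0 in G0, G1. simpl in G0, G1. rewrite G2 in G0, G1.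
        simpl. rewrite !Rminus_0_r. split.
        + rewrite <- Rabs_Ropp. replace (- Re (ipo z (e i))) with (0 + (-1 * Re (ipo z (e i)) - 0 * Im (ipo z (e i)))) by ring. lra.
        + rewrite <- Rabs_Ropp. replace (- Im (ipo z (e i))) with (0 + (-1 * Im (ipo z (e i)) + 0 * Re (ipo z (e i)))) by ring. lra. }
    rewrite Ez. apply Cx_eq; simpl; ring. }
  assert (tail : forall n, nsq y = sumI g (L n) + nsq (vsub o y (u n))).
  { intro n. unfold u. rewrite (bessel_eq y (ONL n)). unfold sumc2. rewrite sumI_map. fold g. ring. }
  assert (y_le : nsq y <= c).
  { apply Rnot_lt_le. intro Hlt.
    set (eps := sqrt (nsq y - c)).
    assert (ep : 0 < eps) by (apply sqrt_lt_R0; lra).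
    destruct (zlim eps ep) as [N h]. specialize (h N ltac:(lia)).
    rewrite <- yz in h. rewrite (norm_sub_sym hH) in h. unfold norm in h.
    assert (nsq (vsub o y (u N)) < nsq y - c).
    { unfold eps in h. apply sqrt_lt_0_alt in h. exact h. }
    pose proof (tail N). pose proof (Lle N). lra. }
  lra.
Qed.

End Bessel.

Section GS.
Variable H : Type.
Variable o : HOps H.
Hypothesis hH : is_CHilbert o.

Notation ad := (vadd o).
Notation sc := (vscal o).
Notation z0 := (vzero o).
Notation op := (vopp o).
Notation ipo := (ip o).
Notation nsq := (nsq o).

Lemma sumc2_cons h hs y : sumc2 o (h :: hs) y = c2 (ipo y h) + sumc2 o hs y.
Proof. reflexivity. Qed.

Lemma gram_schmidt (gs : list H) : exists hs, ON o hs /\ (length hs <= length gs)%nat /\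
  forall g, In g gs -> sumc2 o hs g = nsq g.
Proof.
  induction gs as [|g gs IH].
  - exists nil. split. constructor. split. simpl; lia. intros g [].
  - destruct IH as [hs [O [Le F]]].
    set (r := vsub o g (projv o hs g)).
    assert (Br : nsq r = nsq g - sumc2 o hs g) by (apply (bessel_eq hH); auto).
    destruct (Req_dec (nsq r) 0) as [R0|R0].
    + exists hs. split; auto. split. simpl; lia.
      intros g' [<-|Ig]; auto. lra.
    + assert (rp : 0 < nsq r) by (pose proof (nsq_ge0 hH r); lra).
      set (n := norm o r).
      assert (nn : n * n = nsq r) by apply (norm_sq hH).
      assert (np : 0 < n) by (pose proof (norm_ge0 o r); unfold n in *; nra).
      set (h := sc (RC (/ n)) r).
      assert (rorth : forall g', In g' hs -> ipo g' r = C0).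
      { intros g' Ig'. unfold r. rewrite (ipsubr hH). rewrite (ipC hH (projv o hs g) g').
        rewrite (projv_in hH) by auto. rewrite (ipC hH g' g). apply Cx_eq; simpl; ring. }
      assert (O' : ON o (h :: hs)).
      { constructor; auto.
        - unfold h. rewrite (ipSl hH), (ipSr hH). pose proof (Im_ipxx hH r).
          apply Cx_eq; simpl. fold (nsq r). rewrite H0, <- nn. field. lra. rewrite H0. ring.
        - intros g' Ig'. unfold h. rewrite (ipSr hH), rorth by auto. apply Cx_eq; simpl; ring. }
      assert (Bes : forall y, sumc2 o (h :: hs) y <= nsq y) by (intro; apply (bessel hH); auto).
      exists (h :: hs). split; auto. split. simpl; lia.
      intros g' [<-|Ig].
      * rewrite sumc2_cons.
        assert (gr : g = ad r (projv o hs g)) by (unfold r; vsolve hH).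
        assert (E : ipo g h = RC n).
        { unfold h. rewrite (ipSr hH). rewrite gr at 1. rewrite (ipAl hH).
          rewrite (projv_orth hH) by auto. pose proof (Im_ipxx hH r).
          apply Cx_eq; simpl. fold (nsq r). rewrite <- nn. field. lra. rewrite H0. ring. }
        rewrite E. unfold c2; simpl. rewrite nn. lra.
      * rewrite sumc2_cons. rewrite F by auto. specialize (Bes g'). rewrite sumc2_cons, F in Bes by auto.
        pose proof (c2_ge0 (ipo g' h)). lra.
Qed.

End GS.

Lemma sumI_swap {I J} (f : I -> J -> R) l1 l2 :
  sumI (fun i => sumI (fun j => f i j) l2) l1 = sumI (fun j => sumI (fun i => f i j) l1) l2.
Proof.
  induction l1; simpl.
  - induction l2; simpl; auto. unfold sumI in *; simpl. rewrite <- IHl2. ring.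
  - unfold sumI at 1. simpl. fold (sumI (fun i => sumI (fun j => f i j) l2) l1). rewrite IHl1.
    clear IHl1. induction l2; simpl. unfold sumI; simpl; ring.
    unfold sumI in *; simpl. rewrite <- IHl2. ring.
Qed.

Lemma sumI_le {I} (f g : I -> R) l : (forall i, In i l -> f i <= g i) -> sumI f l <= sumI g l.
Proof. induction l; simpl; intros; unfold sumI in *; simpl. lra. pose proof (H a (or_introl eq_refl)).
  assert (fold_right (fun i acc => f i + acc) 0 l <= fold_right (fun i acc => g i + acc) 0 l) by (apply IHl; auto).
  lra. Qed.

Lemma sumI_plus {I} (f g : I -> R) l : sumI (fun i => f i + g i) l = sumI f l + sumI g l.
Proof. induction l; unfold sumI in *; simpl. ring. rewrite IHl. ring. Qed.
Lemma sumI_scal {I} (a : R) (f : I -> R) l : sumI (fun i => a * f i) l = a * sumI f l.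
Proof. induction l; unfold sumI in *; simpl. ring. rewrite IHl. ring. Qed.
Lemma sumI_const {I} (a : R) (l : list I) : sumI (fun _ => a) l = a * INR (length l).
Proof. induction l. unfold sumI; simpl; ring.
  change (a + sumI (fun _ => a) l = a * INR (S (length l))). rewrite IHl, S_INR. ring. Qed.

Section Core.
Variable H : Type.
Variable o : HOps H.
Hypothesis hH : is_CHilbert o.

Notation ad := (vadd o).
Notation sc := (vscal o).
Notation z0 := (vzero o).
Notation ipo := (ip o).
Notation nsq := (nsq o).

Lemma common_list {I : Type} (hs : list H) (F : H -> list I -> R) :
  (forall h l1 l2, NoDup l1 -> incl l1 l2 -> F h l1 <= F h l2) ->
  (forall h, In h hs -> exists l, NoDup l /\ 0 < F h l) ->
  exists l, NoDup l /\ forall h, In h hs -> 0 < F h l.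
Proof.
  intros Mono Ex. induction hs as [|h hs IH].
  - exists nil. split. constructor. intros h [].
  - destruct IH as [l [N Hl]]. intros; apply Ex; right; auto.
    destruct (Ex h (or_introl eq_refl)) as [lh [Nh Hh]].
    set (dec := fun a b : I => excluded_middle_informative (a = b)).
    exists (nodup dec (l ++ lh)). split. apply NoDup_nodup.
    intros h' [<-|Ih'].
    + apply Rlt_le_trans with (F h lh). exact Hh. apply Mono; auto. intros x Hx. apply nodup_In. apply in_or_app; auto.
    + apply Rlt_le_trans with (F h' l). apply Hl; auto. apply Mono; auto. intros x Hx. apply nodup_In. apply in_or_app; auto.
Qed.

Lemma core (A B P : H -> H) (MP : R) (g : nat -> H) (xi : nat -> R) (F : list nat)
  (PL : linear_op o P) (PP : positive_op o P) (PB : bnd o P MP)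
  (PA : forall x, Re (ipo (A x) x) - nsq x <= Re (ipo (P x) x))
  (AB : forall x, Re (ipo (B x) x) <= Re (ipo (A x) x))
  (NF : NoDup F) (gu : forall j, In j F -> nsq (g j) = 1)
  (Bg : forall x, sumI (fun j => xi j * c2 (ipo x (g j))) F <= Re (ipo (B x) x)) :
  trace_ge o P (sumI (fun j => xi j - 1) F).
Proof.
  destruct (gram_schmidt hH (map g F)) as [hs [Ohs [Lhs Shs]]].
  rewrite length_map in Lhs.
  assert (hunit : forall h, In h hs -> nsq h = 1).
  { clear -Ohs hH. induction Ohs; simpl; intros h' Ih. contradiction.
    destruct Ih as [<-|Ih]; auto. rewrite ?nsq_def. rewrite H0. reflexivity. }
  assert (sumP : sumI (fun j => xi j - 1) F <= sumI (fun h => Re (ipo (P h) h)) hs).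
  { apply Rle_trans with (sumI (fun h => sumI (fun j => xi j * c2 (ipo h (g j))) F - 1) hs).
    - rewrite (sumI_plus (fun h => sumI (fun j => xi j * c2 (ipo h (g j))) F) (fun _ => -1)).
      rewrite sumI_swap, sumI_const.
      assert (E : sumI (fun j => sumI (fun h => xi j * c2 (ipo h (g j))) hs) F = sumI xi F).
      { apply sumI_ext. intros j Hj. rewrite sumI_scal.
        assert (sumI (fun h => c2 (ipo h (g j))) hs = 1).
        { rewrite <- (gu j Hj). rewrite <- (Shs (g j)) by (apply in_map; auto).
          unfold sumc2. apply sumI_ext. intros h _. unfold c2. rewrite (ipC hH h (g j)). simpl. ring. }
        rewrite H0. ring. }
      rewrite E. rewrite (sumI_plus xi (fun _ => -1)), sumI_const.
      apply le_INR in Lhs. lra.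
    - apply sumI_le. intros h Hh. specialize (PA h). rewrite hunit in PA by auto.
      specialize (AB h). specialize (Bg h). lra. }
  destruct (sqrt_exists hH PL PP PB) as [W [WH WW]].
  intros I e Oe eps ep.
  set (n := INR (length hs) + 1).
  assert (np : 0 < n) by (unfold n; pose proof (pos_INR (length hs)); lra).
  set (d := eps / n).
  assert (dp : 0 < d) by (unfold d; apply Rdiv_lt_0_compat; lra).
  destruct (common_list hs (fun h l => sumI (fun i => c2 (ipo (W h) (e i))) l - (nsq (W h) - d)))
    as [l [Nl Hl]].
  { intros h l1 l2 N12 I12. assert (sumI (fun i => c2 (ipo (W h) (e i))) l1 <= sumI (fun i => c2 (ipo (W h) (e i))) l2).
    apply sumI_incl; auto. intro; apply c2_ge0. lra. }
  { intros h Hh. destruct (parseval hH (W h) Oe dp) as [l [N Hl]]. exists l. split; auto. lra. }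
  exists l. split; auto.
  change (sumI (fun j => xi j - 1) F - eps < sumI (fun i => Re (ipo (P (e i)) (e i))) l).
  assert (T1 : sumI (fun i => Re (ipo (P (e i)) (e i))) l >= sumI (fun i => sumc2 o hs (W (e i))) l).
  { apply Rle_ge. apply sumI_le. intros i _. rewrite <- WW, WH. apply (bessel hH). auto. }
  assert (T2 : sumI (fun i => sumc2 o hs (W (e i))) l = sumI (fun h => sumI (fun i => c2 (ipo (W h) (e i))) l) hs).
  { unfold sumc2. rewrite sumI_swap. apply sumI_ext. intros h _. apply sumI_ext. intros i _.
    rewrite WH. unfold c2. rewrite (ipC hH (e i) (W h)). simpl. ring. }
  assert (T3 : sumI (fun h => sumI (fun i => c2 (ipo (W h) (e i))) l) hs >= sumI (fun h => Re (ipo (P h) h) - d) hs).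
  { apply Rle_ge. apply sumI_le. intros h Hh. specialize (Hl h Hh). simpl in Hl.
    rewrite <- WW, WH. fold (nsq (W h)). lra. }
  rewrite (sumI_plus (fun h => Re (ipo (P h) h)) (fun _ => - d)), sumI_const in T3.
  assert (d * INR (length hs) < eps).
  { unfold d. unfold n in *. apply Rmult_lt_reg_r with (INR (length hs) + 1). lra.
    replace (eps / (INR (length hs) + 1) * INR (length hs) * (INR (length hs) + 1)) with (eps * INR (length hs)) by (field; lra).
    pose proof (pos_INR (length hs)). nra. }
  lra.
Qed.

End Core.

Definition gtb1 (r : R) : bool := if Rlt_dec 1 r then true else false.

Lemma excess_sum xi N : excess xi N = sumI (fun j => xi j - 1) (filter (fun j => gtb1 (xi j)) (seq 0 N)).
Proof.
  induction N. reflexivity.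
  rewrite seq_S, filter_app, sumI_app. simpl. rewrite IHN. unfold gtb1.
  destruct (Rlt_dec 1 (xi N)); unfold sumI; simpl; ring.
Qed.

Lemma choice_fun {H : Type} (d : H) (Q : nat -> Prop) (R0 : nat -> H -> Prop) :
  (forall j, Q j -> exists v, R0 j v) -> exists g : nat -> H, forall j, Q j -> R0 j (g j).
Proof.
  intros Ex.
  exists (fun j => match excluded_middle_informative (Q j) with
                   | left p => proj1_sig (constructive_indefinite_description _ (Ex j p))
                   | right _ => d end).
  intros j q. destruct (excluded_middle_informative (Q j)) as [p|np]; [|contradiction].
  apply (proj2_sig (constructive_indefinite_description _ (Ex j p))).
Qed.

Theorem lemma2p8 (H : Type) (o : HOps H) (hH : is_CHilbert o)
  (A B : H -> H) (hA : bounded_op o A) (hB : bounded_op o B)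
  (h0B : op_le o (zeroop o) B) (hBA : op_le o B A)
  (len : option nat) (xi : nat -> R) (hxi : admissible o B len xi)
  (P : H -> H) (hP : pos_part o (opsub o A (idop (H:=H))) P)
  (N : nat) (hN : prefix_ok len N) :
  trace_ge o P (excess xi N).
Proof.
  destruct hA as [AL [MA AB]]. destruct hB as [BL [MB BB]].
  destruct hP as [S [[[SL [MS SB]] [SP SS]] PE]].
  set (X := opsub o A (idop (H:=H))) in *.
  assert (Bpos : positive_op o B).
  { intro x. specialize (h0B x). unfold opsub, zeroop in h0B.
    replace (vsub o (B x) (vzero o)) with (B x) in h0B by vsolve hH. exact h0B. }
  assert (ABle : forall x, Re (ip o (B x) x) <= Re (ip o (A x) x)).
  { intro x. destruct (hBA x) as [_ h]. unfold opsub in h. rewrite (ipsubl hH) in h. simpl in h. lra. }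
  assert (Apos : positive_op o A).
  { intro x. destruct (hBA x) as [h1 h2]. destruct (Bpos x) as [b1 b2].
    unfold opsub in h1, h2. rewrite (ipsubl hH) in h1, h2. simpl in h1, h2. split; lra. }
  assert (AH : herm o A) by (apply (pos_herm hH AL Apos)).
  assert (XL : linear_op o X).
  { split; intros; unfold X, opsub, idop.
    - rewrite (lin_add _ _ AL). vsolve hH.
    - rewrite (lin_scal _ _ AL). vsolve hH. }
  assert (XH : herm o X).
  { intros x y. unfold X, opsub, idop. rewrite (ipsubl hH), (ipsubr hH), AH. reflexivity. }
  assert (XB : bnd o X (MA + 1)).
  { intro x. unfold X, opsub, idop. eapply Rle_trans. apply (norm_sub_le hH). pose proof (AB x). lra. }
  set (X' := fun x => vopp o (X x)).
  assert (X'L : linear_op o X').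
  { split; intros; unfold X'.
    - rewrite (lin_add _ _ XL). vsolve hH.
    - rewrite (lin_scal _ _ XL). vsolve hH. }
  assert (X'H : herm o X').
  { intros x y. unfold X'. rewrite (ipOl hH), (ipOr hH), XH. reflexivity. }
  assert (X'B : bnd o X' (MA + 1)).
  { intro x. unfold X'. rewrite (norm_opp hH). apply XB. }
  assert (SX : forall x, S (S x) = X (X x)) by (intro; rewrite SS; reflexivity).
  assert (SX' : forall x, S (S x) = X' (X' x)).
  { intro x. unfold X'. rewrite (lin_opp hH _ XL). rewrite SX. vsolve hH. }
  pose proof (SgeX hH SL SP SB XL XH XB SX) as G1.
  pose proof (SgeX hH SL SP SB X'L X'H X'B SX') as G2.
  assert (PRe : forall x, Re (ip o (P x) x) = (Re (ip o (X x) x) + Re (ip o (S x) x)) / 2).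
  { intro x. rewrite PE, (ipSl hH), (ipAl hH). simpl. field. }
  assert (PL : linear_op o P).
  { split; intros; rewrite !PE.
    - rewrite (lin_add _ _ XL), (lin_add _ _ SL). vsolve hH.
    - rewrite (lin_scal _ _ XL), (lin_scal _ _ SL). vsolve hH. }
  assert (PP : positive_op o P).
  { intro x. split.
    - rewrite PE, (ipSl hH), (ipAl hH). simpl. rewrite (herm_real hH x XH), (herm_real hH x (pos_herm hH SL SP)). ring.
    - rewrite PRe. specialize (G2 x). unfold X' in G2. rewrite (ipOl hH) in G2. simpl in G2. lra. }
  assert (PB : bnd o P (Rabs (MA + 1) + Rabs MS)).
  { intro x. rewrite PE, (norm_scalR hH). eapply Rle_trans.
    apply Rmult_le_compat_l. apply Rabs_pos. apply (norm_triangle hH).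
    pose proof (bnd_abs XB x). pose proof (bnd_abs SB x). rewrite Rabs_pos_eq by lra.
    pose proof (norm_ge0 o x).
    assert (0 <= Rabs (MA + 1) * norm o x) by (apply Rmult_le_pos; auto; apply Rabs_pos).
    assert (0 <= Rabs MS * norm o x) by (apply Rmult_le_pos; auto; apply Rabs_pos). lra. }
  assert (PA : forall x, Re (ip o (A x) x) - nsq o x <= Re (ip o (P x) x)).
  { intro x. rewrite PRe. specialize (G1 x). unfold X, opsub, idop in *. rewrite (ipsubl hH) in *. simpl in *.
    rewrite ?nsq_def. lra. }
  destruct hxi as [xpos [_ [Pj [Prk Bsum]]]].
  destruct (choice_fun (vzero o) (fun j => in_idx len j)
              (fun j v => norm o v = 1 /\ forall x, Pj j x = vscal o (ip o x v) v) Prk) as [g Hg].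
  set (F := filter (fun j => gtb1 (xi j)) (seq 0 N)).
  rewrite excess_sum. fold F.
  assert (FN : forall j, In j F -> (j < N)%nat /\ 1 < xi j).
  { intros j Hj. unfold F in Hj. apply filter_In in Hj. destruct Hj as [Hs Hb].
    apply in_seq in Hs. unfold gtb1 in Hb. destruct (Rlt_dec 1 (xi j)); [|discriminate]. split; auto. lia. }
  assert (idxN : forall j, (j < N)%nat -> in_idx len j).
  { intros j Hj. destruct len; simpl in *; auto. lia. }
  assert (psumE : forall n x, (forall j, (j < n)%nat -> in_idx len j) ->
            Re (ip o (psum o xi Pj n x) x) = sumI (fun j => xi j * c2 (ip o x (g j))) (seq 0 n)).
  { induction n; intros x Hi. simpl. rewrite (ip0l hH). reflexivity.
    simpl psum. rewrite seq_S, sumI_app, (ipAl hH), (ipSl hH). simpl.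
    rewrite IHn by (intros; apply Hi; lia).
    destruct (Hg n (Hi n ltac:(lia))) as [_ Pn]. rewrite Pn, (ipSl hH). rewrite (ipC hH x (g n)).
    unfold sumI, c2. simpl. ring. }
  assert (FsubN : forall n x, (N <= n)%nat -> (forall j, (j < n)%nat -> in_idx len j) ->
            sumI (fun j => xi j * c2 (ip o x (g j))) F <= Re (ip o (psum o xi Pj n x) x)).
  { intros n x Nn Hi. rewrite psumE by auto.
    rewrite (sumI_ext (fun j => xi j * c2 (ip o x (g j))) (fun j => Rabs (xi j) * c2 (ip o x (g j))) F).
    rewrite (sumI_ext (fun j => xi j * c2 (ip o x (g j))) (fun j => Rabs (xi j) * c2 (ip o x (g j))) (seq 0 n)).
    apply sumI_incl. intro; pose proof (Rabs_pos (xi i)); pose proof (c2_ge0 (ip o x (g i))); nra.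
    apply NoDup_filter, seq_NoDup.
    intros j Hj. destruct (FN j Hj). apply in_seq. lia.
    intros j Hj. apply in_seq in Hj. rewrite Rabs_pos_eq; [reflexivity|]. apply xpos, Hi. lia.
    intros j Hj. destruct (FN j Hj). rewrite Rabs_pos_eq; [reflexivity|]. lra. }
  assert (Bg : forall x, sumI (fun j => xi j * c2 (ip o x (g j))) F <= Re (ip o (B x) x)).
  { intro x. destruct len as [n|].
    - rewrite Bsum. apply FsubN; auto.
    - apply Rnot_lt_le. intro Hlt.
      set (gap := sumI (fun j => xi j * c2 (ip o x (g j))) F - Re (ip o (B x) x)).
      assert (gp : 0 < gap) by (unfold gap; lra).
      destruct (Bsum x (gap / (norm o x + 1))) as [M0 HM].
      { apply Rdiv_lt_0_compat; auto. pose proof (norm_ge0 o x); lra. }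
      specialize (HM (max M0 N) ltac:(lia)).
      pose proof (FsubN (max M0 N) x ltac:(lia) ltac:(intros; exact I)) as Fs.
      pose proof (absRe_le_norm hH (vsub o (psum o xi Pj (max M0 N) x) (B x)) x) as Ab.
      rewrite (ipsubl hH) in Ab. simpl in Ab.
      pose proof (norm_ge0 o x).
      assert (norm o (vsub o (psum o xi Pj (max M0 N) x) (B x)) * norm o x <= gap / (norm o x + 1) * norm o x).
      { apply Rmult_le_compat_r; lra. }
      assert (gap / (norm o x + 1) * norm o x < gap).
      { apply Rmult_lt_reg_r with (norm o x + 1). lra.
        replace (gap / (norm o x + 1) * norm o x * (norm o x + 1)) with (gap * norm o x) by (field; lra). nra. }
      pose proof (Rle_abs (Re (ip o (psum o xi Pj (max M0 N) x) x) + (-1 * Re (ip o (B x) x) - 0 * Im (ip o (B x) x)))).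
      unfold gap in *. lra. }
  apply (@core H o hH A B P _ g xi F PL PP PB PA ABle).
  - apply NoDup_filter, seq_NoDup.
  - intros j Hj. destruct (FN j Hj). destruct (Hg j (idxN j H0)) as [n1 _].
    rewrite <- (norm_sq hH), n1. ring.
  - exact Bg.
Qed.
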